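(* Let $k\in\{-1,0,1\}$ and let $a$ be a regular scale factor (extended evenly to negative arguments) with finite particle horizon, i.e. $\int_0^\tau\frac{dt}{a(t)}<\infty$ for $\tau>0$. Then for every $\tau_0>0$, $\lim_{(\tau,t_0)\to(\tau_0,0)}a^2(t_0)S_k^2(\chi_{|t_0|}(\tau))=0$; consequently, defining $g_{\theta\theta}$ and $g_{\phi\phi}$ at points with $\rho=\rho_{\mathcal M_\tau}$ by these limits, $g_{\theta\theta}(\tau,\rho)$ and $g_{\phi\phi}(\tau,\rho,\theta)$ are continuous on $D_{\mathrm{polar}}$ and vanish at $(\tau,\rho_{\mathcal M_\tau})$.
   Context: A function $a:[0,\infty)\to[0,\infty)$ is a regular scale factor if: (a) $a(0)=0$; (b) $a$ is increasing and continuous on $[0,\infty)$, twice continuously differentiable on $(0,\infty)$, with an inverse function on $[0,\infty)$; (c) $\frac{a(t)\ddot a(t)}{\dot a(t)^2}\le1$ for all $t>0$ (presupposing $\dot a(t)\ne0$). Extend $a$ by $a(-t)=a(t)$. $S_1=\sin$, $S_0(\chi)=\chi$, $S_{-1}=\sinh$. For $0<s<\tau$, $\chi_s(\tau)=\int_s^\tau\frac{1}{a(t)}\frac{a(\tau)}{\sqrt{a^2(\tau)-a^2(t)}}dt$. For $\tau>0$, $\rho_{\mathcal M_\tau}=\int_0^\tau\frac{a(t)}{\sqrt{a^2(\tau)-a^2(t)}}dt$; for $0<\rho<2\rho_{\mathcal M_\tau}$, $t_0(\tau,\rho)$ is the unique $t_0\in(-\tau,\tau)$ with $\rho=\int_{t_0}^\tau\frac{a(t)}{\sqrt{a^2(\tau)-a^2(t)}}dt$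 ($t_0=0$ iff $\rho=\rho_{\mathcal M_\tau}$). Define $f(\tau,t_0)=\int_{t_0}^{\tau}\frac{\ddot a(t)}{\dot a(t)^2}\left(\frac{\sqrt{a^2(\tau)-a^2(t_0)}}{\sqrt{a^2(\tau)-a^2(t)}}-1\right)dt$ for $0\le t_0<\tau$, $f(\tau,t_0)=2f(\tau,0)-f(\tau,-t_0)$ for $-\tau<t_0<0$, and $g_{\tau\tau}(\tau,\rho)=-[1-\dot a(\tau)f(\tau,t_0(\tau,\rho))]^2$. Let $\rho_{\max}(\tau)=\inf\{\rho\in(0,2\rho_{\mathcal M_\tau}):g_{\tau\tau}(\tau,\rho)=0\}$ if this set is nonempty, else $2\rho_{\mathcal M_\tau}$. $D_{\mathrm{polar}}=\{(\tau,\rho,\theta,\phi):\tau>0,\ 0<\rho<\rho_{\max}(\tau),\ \theta\in I_\pi,\ \phi\in I_{2\pi}\}$, with $I_\pi,I_{2\pi}$ open intervals of lengths $\pi,2\pi$. For $t_0(\tau,\rho)\ne0$: $g_{\theta\theta}(\tau,\rho)=a^2(t_0)S_k^2(\chi_{|t_0|}(\tau))$ with $t_0=t_0(\tau,\rho)$, and $g_{\phi\phi}(\tau,\rho,\theta)=g_{\theta\theta}(\tau,\rho)\sin^2\theta$ (angular metric coefficients of the extended Robertson–Walker metric $ds^2=g_{\tau\tau}d\tau^2+d\rho^2+g_{\theta\theta}d\theta^2+g_{\phi\phi}d\phi^2$ in Fermi polar coordinates). *)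

(* Defs.v *)
From Stdlib Require Import Reals Lra ZArith ClassicalEpsilon.
From Coquelicot Require Import Coquelicot.
Open Scope R_scope.

Definition sinhR (x : R) : R := (exp x - exp (- x)) / 2.
Definition Sk (k : Z) (x : R) : R :=
  match k with
  | 1%Z => sin x
  | 0%Z => x
  | _ => sinhR x
  end.

(* Regular scale factor.  [a : R -> R] is already the even extension,
   a(-t) = a(t). *)
Definition regular_scale_factor (a : R -> R) : Prop :=
  a 0 = 0 /\
  (forall t, a (- t) = a t) /\
  (forall s t, 0 <= s -> s < t -> a s < a t) /\
  (forall t, 0 <= t ->
     filterlim a (within (fun x => 0 <= x) (locally t)) (locally (a t))) /\
  (forall t, 0 < t ->
     ex_derive a t /\ ex_derive (Derive a) t /\
     continuous (Derive (Derive a)) t) /\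
  (* (b) has an inverse function on [0,oo): a maps [0,oo) onto [0,oo) *)
  (forall y, 0 <= y -> exists t, 0 <= t /\ a t = y) /\
  (forall t, 0 < t ->
     Derive a t <> 0 /\
     a t * Derive (Derive a) t / (Derive a t) ^ 2 <= 1).

Definition finite_particle_horizon (a : R -> R) : Prop :=
  forall tau, 0 < tau -> ex_RInt_gen (fun t => / a t) (at_right 0) (at_point tau).

Definition impint (f : R -> R) (lo hi : R) : R :=
  RInt_gen f (at_right lo) (at_left hi).

Definition chi (a : R -> R) (s tau : R) : R :=
  impint (fun t => / a t * (a tau / sqrt (a tau ^ 2 - a t ^ 2))) s tau.

Definition rho_of (a : R -> R) (tau t0 : R) : R :=
  impint (fun t => a t / sqrt (a tau ^ 2 - a t ^ 2)) t0 tau.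

Definition rhoM (a : R -> R) (tau : R) : R := rho_of a tau 0.

Definition t0fun (a : R -> R) (tau rho : R) : R :=
  epsilon (inhabits 0) (fun t0 => - tau < t0 < tau /\ rho_of a tau t0 = rho).

Definition f_pos (a : R -> R) (tau t0 : R) : R :=
  impint (fun t => Derive (Derive a) t / (Derive a t) ^ 2 *
                   (sqrt (a tau ^ 2 - a t0 ^ 2) / sqrt (a tau ^ 2 - a t ^ 2) - 1))
         t0 tau.

Definition f_fun (a : R -> R) (tau t0 : R) : R :=
  if Rle_dec 0 t0 then f_pos a tau t0
  else 2 * f_pos a tau 0 - f_pos a tau (- t0).

Definition g_tautau (a : R -> R) (tau rho : R) : R :=
  - (1 - Derive a tau * f_fun a tau (t0fun a tau rho)) ^ 2.

Definition rho_max_set (a : R -> R) (tau : R) : R -> Prop :=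
  fun rho => 0 < rho < 2 * rhoM a tau /\ g_tautau a tau rho = 0.

Definition rho_max (a : R -> R) (tau : R) : R :=
  if excluded_middle_informative (exists rho, rho_max_set a tau rho)
  then real (Glb_Rbar (rho_max_set a tau))
  else 2 * rhoM a tau.

Definition D_polar (a : R -> R) (th1 ph1 : R) (p : R * R * R * R) : Prop :=
  let '(tau, rho, theta, phi) := p in
  0 < tau /\ 0 < rho < rho_max a tau /\
  th1 < theta < th1 + PI /\ ph1 < phi < ph1 + 2 * PI.

(* Angular metric coefficients, extended at t0 = 0 (i.e. rho = rho_M)
   by the limit value 0. *)
Definition g_thth (a : R -> R) (k : Z) (tau rho : R) : R :=
  let t0 := t0fun a tau rho in
  if Req_EM_T t0 0 then 0
  else (a t0) ^ 2 * (Sk k (chi a (Rabs t0) tau)) ^ 2.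

Definition g_phph (a : R -> R) (k : Z) (tau rho theta : R) : R :=
  g_thth a k tau rho * (sin theta) ^ 2.

(* Main.v *)
Require Import Defs.
From Stdlib Require Import Reals Lra ZArith ClassicalEpsilon Classical FunctionalExtensionality.
From Coquelicot Require Import Coquelicot.
Open Scope R_scope.


Lemma ball_R (x y e : R) : ball x e y <-> Rabs (y - x) < e.
Proof. reflexivity. Qed.

Lemma cont_R_intro (f : R -> R) x :
  (forall eps, 0 < eps -> exists d, 0 < d /\ forall y, Rabs (y - x) < d -> Rabs (f y - f x) < eps) ->
  continuous f x.
Proof.
  intros H. apply filterlim_locally. intros eps.
  destruct (H eps (cond_pos eps)) as [d [Hd H']].
  exists (mkposreal d Hd). intros y Hy. apply H'. exact Hy.
Qed.

Lemma cont_R_elim (f : R -> R) x : continuous f x ->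
  forall eps, 0 < eps -> exists d, 0 < d /\ forall y, Rabs (y - x) < d -> Rabs (f y - f x) < eps.
Proof.
  intros H eps He. apply filterlim_locally with (eps := mkposreal eps He) in H.
  destruct H as [d Hd]. exists d. split. apply cond_pos. intros y Hy. apply (Hd y Hy).
Qed.

Lemma cont2_intro (F : R * R -> R) x w :
  (forall eps, 0 < eps -> exists d, 0 < d /\ forall y v, Rabs (y - x) < d -> Rabs (v - w) < d -> Rabs (F (y, v) - F (x, w)) < eps) ->
  continuous F (x, w).
Proof.
  intros H. apply filterlim_locally. intros eps.
  destruct (H eps (cond_pos eps)) as [d [Hd H']].
  exists (mkposreal d Hd). intros [y v] [Hy Hv]. apply H'. exact Hy. exact Hv.
Qed.

Lemma cont2_elim (F : R * R -> R) x w : continuous F (x, w) ->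
  forall eps, 0 < eps -> exists d, 0 < d /\ forall y v, Rabs (y - x) < d -> Rabs (v - w) < d -> Rabs (F (y, v) - F (x, w)) < eps.
Proof.
  intros H eps He. apply filterlim_locally with (eps := mkposreal eps He) in H.
  destruct H as [d Hd]. exists d. split. apply cond_pos. intros y v Hy Hv. apply (Hd (y, v)). split; assumption.
Qed.

Lemma cmul {U : UniformSpace} (f g : U -> R) x : continuous f x -> continuous g x -> continuous (fun y => f y * g y) x.
Proof. intros; apply (@continuous_mult U R_AbsRing f g x); auto. Qed.
Lemma cplus {U : UniformSpace} (f g : U -> R) x : continuous f x -> continuous g x -> continuous (fun y => f y + g y) x.
Proof. intros; apply (@continuous_plus U R_AbsRing R_NormedModule f g x); auto. Qed.
Lemma copp {U : UniformSpace} (f : U -> R) x : continuous f x -> continuous (fun y => - f y) x.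
Proof. intros; apply (@continuous_opp U R_AbsRing R_NormedModule f x); auto. Qed.
Lemma cminus {U : UniformSpace} (f g : U -> R) x : continuous f x -> continuous g x -> continuous (fun y => f y - g y) x.
Proof. intros; apply (cplus f (fun y => - g y)); auto. apply copp; auto. Qed.
Lemma ccomp {U : UniformSpace} (f : U -> R) (g : R -> R) x : continuous f x -> continuous g (f x) -> continuous (fun y => g (f y)) x.
Proof. intros; apply (@continuous_comp U R_UniformSpace R_UniformSpace f g x); auto. Qed.
Lemma cinv {U : UniformSpace} (f : U -> R) x : continuous f x -> f x <> 0 -> continuous (fun y => / f y) x.
Proof. intros; apply (ccomp f Rinv); auto. apply continuous_Rinv; auto. Qed.
Lemma cdiv {U : UniformSpace} (f g : U -> R) x : continuous f x -> continuous g x -> g x <> 0 -> continuous (fun y => f y / g y) x.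
Proof. intros; apply (cmul f (fun y => / g y)); auto. apply cinv; auto. Qed.
Lemma csqrt {U : UniformSpace} (f : U -> R) x : continuous f x -> continuous (fun y => sqrt (f y)) x.
Proof. intros; apply (ccomp f sqrt); auto. apply continuous_sqrt. Qed.
Lemma cpow {U : UniformSpace} (f : U -> R) (n : nat) x : continuous f x -> continuous (fun y => f y ^ n) x.
Proof. intros; apply (ccomp f (fun z => z ^ n)); auto.
  apply (@ex_derive_continuous R_AbsRing R_NormedModule); auto_derive; auto. Qed.
Lemma cconst {U : UniformSpace} (c : R) (x : U) : continuous (fun _ => c) x.
Proof. apply continuous_const. Qed.
Lemma cid (x : R) : continuous (fun y => y) x.
Proof. apply continuous_id. Qed.
Lemma cfst (p : R * R) : continuous (fun q : R * R => fst q) p.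
Proof. destruct p; apply continuous_fst. Qed.
Lemma csnd (p : R * R) : continuous (fun q : R * R => snd q) p.
Proof. destruct p; apply continuous_snd. Qed.

Lemma exRc (f : R -> R) a b : (forall z, Rmin a b <= z <= Rmax a b -> continuous f z) -> ex_RInt f a b.
Proof. intros; apply (@ex_RInt_continuous R_CompleteNormedModule); auto. Qed.

Lemma abs_helper z W0 Wm : Rabs (z - W0) < Wm - Rabs W0 -> Rabs z <= Wm.
Proof. intros H. replace z with ((z - W0) + W0) by ring.
  eapply Rle_trans. apply Rabs_triang. lra. Qed.



Lemma a0 a : regular_scale_factor a -> a 0 = 0.
Proof. intros H; apply H. Qed.
Lemma a_even a : regular_scale_factor a -> forall t, a (- t) = a t.
Proof. intros H; apply H. Qed.
Lemma a_incr a : regular_scale_factor a -> forall s t, 0 <= s -> s < t -> a s < a t.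
Proof. intros H; apply H. Qed.

Lemma a_abs a : regular_scale_factor a -> forall t, a (Rabs t) = a t.
Proof. intros H t. unfold Rabs. destruct (Rcase_abs t). apply (a_even a H). reflexivity. Qed.

Lemma a_mono a : regular_scale_factor a -> forall s t, Rabs s < Rabs t -> a s < a t.
Proof. intros H s t Hst. rewrite <- (a_abs a H s), <- (a_abs a H t).
  apply (a_incr a H). apply Rabs_pos. exact Hst. Qed.

Lemma a_monole a : regular_scale_factor a -> forall s t, Rabs s <= Rabs t -> a s <= a t.
Proof. intros H s t Hst. destruct Hst as [Hl|He]. left; apply (a_mono a H); auto.
  right. rewrite <- (a_abs a H s), <- (a_abs a H t), He. reflexivity. Qed.

Lemma a_pos a : regular_scale_factor a -> forall t, t <> 0 -> 0 < a t.
Proof. intros H t Ht. rewrite <- (a0 a H). apply (a_mono a H). rewrite Rabs_R0.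
  apply Rabs_pos_lt; auto. Qed.

Lemma a_nonneg a : regular_scale_factor a -> forall t, 0 <= a t.
Proof. intros H t. destruct (Req_dec t 0). subst; rewrite (a0 a H); lra.
  left; apply (a_pos a H); auto. Qed.

Lemma a_exd a : regular_scale_factor a -> forall t, 0 < t -> ex_derive a t.
Proof. intros H t Ht. destruct H as (_&_&_&_&H&_). apply (proj1 (H t Ht)). Qed.

Lemma da_exd a : regular_scale_factor a -> forall t, 0 < t -> ex_derive (Derive a) t.
Proof. intros H t Ht. destruct H as (_&_&_&_&H&_). apply (proj1 (proj2 (H t Ht))). Qed.

Lemma da_cont a : regular_scale_factor a -> forall t, 0 < t -> continuous (Derive a) t.
Proof. intros H t Ht. apply (@ex_derive_continuous R_AbsRing R_NormedModule). apply (da_exd a H t Ht). Qed.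

Lemma da_nz a : regular_scale_factor a -> forall t, 0 < t -> Derive a t <> 0.
Proof. intros H t Ht. destruct H as (_&_&_&_&_&_&H). apply (H t Ht). Qed.

Lemma da_pos a : regular_scale_factor a -> forall t, 0 < t -> 0 < Derive a t.
Proof.
  intros H t Ht. destruct (Rle_or_lt (Derive a t) 0) as [Hl|Hl]; [|exact Hl].
  exfalso. destruct Hl as [Hl|Hl]; [|exact (da_nz a H t Ht Hl)].
  pose proof (Derive_correct a t (a_exd a H t Ht)) as D.
  apply is_derive_Reals in D.
  destruct (D (- Derive a t / 2)) as [d Hd]. lra.
  set (h := Rmin (d/2) 1).
  assert (Hh : 0 < h). { unfold h. apply Rmin_glb_lt. destruct d; simpl; lra. lra. }
  assert (Hhd : Rabs h < d). { rewrite Rabs_pos_eq by lra. unfold h.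
    eapply Rle_lt_trans. apply Rmin_l. destruct d; simpl; lra. }
  specialize (Hd h ltac:(lra) Hhd).
  assert (Hq : 0 < (a (t + h) - a t) / h).
  { apply Rdiv_lt_0_compat; [|lra]. pose proof (a_incr a H t (t+h) ltac:(lra) ltac:(lra)). lra. }
  revert Hd. unfold Rabs. destruct Rcase_abs; lra.
Qed.

Lemma a_cont a : regular_scale_factor a -> forall t, continuous a t.
Proof.
  intros H t.
  destruct (Rtotal_order t 0) as [Hn|[Hz|Hp]].
  - apply continuous_ext with (f := fun x => a (- x)).
    intros x; apply (a_even a H).
    apply continuous_comp with (f := fun x => - x). apply (@ex_derive_continuous R_AbsRing R_NormedModule); auto_derive; auto.
    apply (@ex_derive_continuous R_AbsRing R_NormedModule), (a_exd a H). lra.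
  - subst. destruct H as (H0&He&Hi&Hc&_).
    specialize (Hc 0 (Rle_refl 0)).
    apply cont_R_intro. intros eps Heps.
    apply filterlim_locally with (eps := mkposreal eps Heps) in Hc.
    destruct Hc as [d Hd]. exists d. split. apply cond_pos.
    intros y Hy. destruct (Rle_or_lt 0 y).
    + apply (Hd y Hy H).
    + rewrite <- He. apply (Hd (- y)). apply ball_R. rewrite Rminus_0_r in *.
      rewrite Rabs_Ropp. exact Hy. lra.
  - apply (@ex_derive_continuous R_AbsRing R_NormedModule), (a_exd a H). lra.
Qed.


Definition qf (a : R -> R) (x w : R) : R :=
  if Req_EM_T w 0 then 2 * a x * Derive a x
  else (a x ^ 2 - a (x - w ^ 2) ^ 2) / w ^ 2.

Lemma sq_lt a : regular_scale_factor a -> forall x t, Rabs t < Rabs x -> a t ^ 2 < a x ^ 2.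
Proof. intros H x t Ht. pose proof (a_mono a H t x Ht). pose proof (a_nonneg a H t). nra. Qed.

Lemma q_pos a x w : regular_scale_factor a -> 0 < x -> w ^ 2 < 2 * x -> 0 < qf a x w.
Proof.
  intros H Hx Hw. unfold qf. destruct (Req_EM_T w 0).
  - pose proof (a_pos a H x ltac:(lra)). pose proof (da_pos a H x Hx). nra.
  - apply Rdiv_lt_0_compat. 2: { apply pow2_gt_0; auto. }
    assert (a (x - w ^ 2) ^ 2 < a x ^ 2). apply (sq_lt a H).
    assert (0 < w ^ 2) by (apply pow2_gt_0; auto).
    rewrite (Rabs_pos_eq x) by lra. unfold Rabs; destruct Rcase_abs; lra. lra.
Qed.

Lemma q_formula a x w : w <> 0 -> qf a x w = (a x ^ 2 - a (x - w ^ 2) ^ 2) / w ^ 2.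
Proof. intros Hw; unfold qf; destruct (Req_EM_T w 0); [contradiction|reflexivity]. Qed.

Lemma a2_der a : regular_scale_factor a -> forall t, 0 < t ->
  is_derive (fun t => a t ^ 2) t (2 * a t * Derive a t).
Proof.
  intros H t Ht. pose proof (Derive_correct a t (a_exd a H t Ht)) as D.
  apply (is_derive_ext (fun t => a t * a t)). intros; simpl; ring.
  replace (2 * a t * Derive a t) with (Derive a t * a t + a t * Derive a t) by ring.
  apply (is_derive_mult a a); auto. intros; apply Rmult_comm.
Qed.

Lemma q_cont a x w : regular_scale_factor a -> 0 < x ->
  continuous (fun p : R * R => qf a (fst p) (snd p)) (x, w).
Proof.
  intros H Hx. destruct (Req_dec w 0) as [Hw|Hw].
  - subst w. apply cont2_intro. intros eps Heps.
    assert (Hh : continuous (fun t => 2 * a t * Derive a t) x).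
    { apply cmul. apply cmul. apply cconst. apply (a_cont a H). apply (da_cont a H x Hx). }
    destruct (cont_R_elim _ _ Hh eps Heps) as [d1 [Hd1 Hc]].
    exists (Rmin (Rmin (d1/2) (x/4)) 1). split.
    { repeat apply Rmin_glb_lt; lra. }
    intros y v Hy Hv. simpl.
    assert (Hm1 := Rmin_l (Rmin (d1/2) (x/4)) 1). assert (Hm2 := Rmin_r (Rmin (d1/2) (x/4)) 1).
    assert (Hm3 := Rmin_l (d1/2) (x/4)). assert (Hm4 := Rmin_r (d1/2) (x/4)).
    set (d := Rmin (Rmin (d1/2) (x/4)) 1) in *.
    rewrite Rminus_0_r in Hv.
    assert (Hd0 : 0 < d). { unfold d; repeat apply Rmin_glb_lt; lra. }
    assert (Hv2 : v ^ 2 < d).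
    { assert (Rabs v * Rabs v < d * 1). apply Rmult_le_0_lt_compat; try apply Rabs_pos; lra.
      rewrite <- Rabs_mult in H0. simpl. rewrite Rmult_1_r. 
      eapply Rle_lt_trans. apply RRle_abs. lra. }
    assert (Hv0 : 0 <= v ^ 2) by (apply pow2_ge_0).
    assert (Hyx : Rabs (y - x) < d) by exact Hy.
    assert (Hy2 : x/2 < y - v ^ 2).
    { unfold Rabs in Hyx; destruct Rcase_abs in Hyx; lra. }
    unfold qf at 2. destruct (Req_EM_T 0 0) as [_|]; [|congruence].
    destruct (Req_EM_T v 0) as [Hv0'|Hv0'].
    + subst v. unfold qf. destruct (Req_EM_T 0 0); [|congruence]. apply Hc. lra.
    + rewrite q_formula by auto.
      destruct (MVT_gen (fun t => a t ^ 2) (y - v ^ 2) y (fun t => 2 * a t * Derive a t)) as [c [Hc1 Hc2]].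
      { intros t Ht. apply (a2_der a H). rewrite Rmin_left in Ht by lra. lra. }
      { intros t Ht. apply continuity_pt_filterlim. apply (cpow a). apply (a_cont a H). }
      rewrite Rmin_left in Hc1 by lra. rewrite Rmax_right in Hc1 by lra.
      replace ((a y ^ 2 - a (y - v ^ 2) ^ 2) / v ^ 2) with (2 * a c * Derive a c).
      apply Hc. unfold Rabs in *. destruct (Rcase_abs (c - x)); destruct (Rcase_abs (y - x)); lra.
      rewrite Hc2. field. auto.
  - apply continuous_ext_loc with (g := fun p : R * R => (a (fst p) ^ 2 - a (fst p - snd p ^ 2) ^ 2) / snd p ^ 2).
    + assert (Hw' : 0 < Rabs w) by (apply Rabs_pos_lt; auto).
      exists (mkposreal _ Hw'). intros [y v] [_ Hv]. simpl in *. rewrite q_formula. reflexivity.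
      intros E; subst v. change (Rabs (0 - w) < Rabs w) in Hv. rewrite Rminus_0_l, Rabs_Ropp in Hv. lra.
    + apply cdiv. apply cminus. apply cpow. apply ccomp. apply cfst. apply (a_cont a H).
      apply cpow. apply ccomp. apply cminus. apply cfst. apply cpow. apply csnd. apply (a_cont a H).
      apply cpow. apply csnd. simpl. intro E. apply Hw. nra.
Qed.


Lemma cont2_slice (G : R -> R -> R) y z :
  continuous (fun p : R * R => G (fst p) (snd p)) (y, z) -> continuous (G y) z.
Proof.
  intros H. apply cont_R_intro. intros eps Heps.
  destruct (cont2_elim _ _ _ H eps Heps) as [d [Hd Hc]].
  exists d. split; auto. intros v Hv. apply (Hc y v). rewrite Rminus_eq_0, Rabs_R0; auto. auto.
Qed.

Lemma RInt_abs_bound (f : R -> R) W M : ex_RInt f 0 W ->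
  (forall t, Rmin 0 W <= t <= Rmax 0 W -> Rabs (f t) <= M) ->
  Rabs (RInt f 0 W) <= Rabs W * M.
Proof.
  intros Hex Hb. destruct (Rle_or_lt 0 W).
  - rewrite (Rabs_pos_eq W H). replace (W * M) with ((W - 0) * M) by ring.
    apply abs_RInt_le_const; auto. intros t Ht; apply Hb.
    rewrite Rmin_left, Rmax_right; try lra.
  - rewrite <- (opp_RInt_swap f W 0) by (apply ex_RInt_swap; auto). change (opp (RInt f W 0)) with (- RInt f W 0).
    rewrite Rabs_Ropp, (Rabs_left W H). replace (- W * M) with ((0 - W) * M) by ring.
    apply abs_RInt_le_const; auto. lra. apply ex_RInt_swap; auto. intros t Ht; apply Hb.
    rewrite Rmin_right, Rmax_left; try lra.
Qed.

Lemma param_cont (G : R -> R -> R) x0 W0 Wm d0 :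
  0 < d0 -> Rabs W0 < Wm ->
  (forall x w, Rabs (x - x0) < d0 -> Rabs w <= Wm ->
     continuous (fun p : R * R => G (fst p) (snd p)) (x, w)) ->
  continuous (fun p : R * R => RInt (G (fst p)) 0 (snd p)) (x0, W0).
Proof.
  intros Hd0 HW0 Hc.
  assert (Hex : forall x W, Rabs (x - x0) < d0 -> Rabs W <= Wm -> ex_RInt (G x) 0 W).
  { intros x W Hx HW. apply exRc. intros z Hz.
    apply cont2_slice. apply Hc; auto.
    assert (Rmin 0 W <= z <= Rmax 0 W) by exact Hz.
    unfold Rmin, Rmax in *; destruct Rle_dec; unfold Rabs in *;
    repeat destruct Rcase_abs; lra. }
  assert (HWm : 0 < Wm) by (pose proof (Rabs_pos W0); lra).
  apply cont2_intro. intros eps Heps.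
  set (eta := eps / (4 * (Wm + 1))).
  assert (Heta : 0 < eta) by (unfold eta; apply Rdiv_lt_0_compat; lra).
  (* tube lemma *)
  assert (Hloc : forall t, exists d : posreal, -Wm <= t <= Wm ->
     d <= d0 /\ forall y v, Rabs (y - x0) < d -> Rabs (v - t) < d -> Rabs (G y v - G x0 t) < eta / 2).
  { intros t. destruct (Rle_dec (- Wm) t) as [H1|H1]; [destruct (Rle_dec t Wm) as [H2|H2]|].
    - assert (Ht : Rabs t <= Wm) by (unfold Rabs; destruct Rcase_abs; lra).
      assert (Hx0 : Rabs (x0 - x0) < d0) by (rewrite Rminus_eq_0, Rabs_R0; auto).
      destruct (cont2_elim _ _ _ (Hc x0 t Hx0 Ht) (eta/2) ltac:(lra)) as [d [Hd Hd']].
      exists (mkposreal (Rmin d d0) ltac:(apply Rmin_glb_lt; auto)). intros _. simpl. split. apply Rmin_r.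
      intros y v Hy Hv. apply (Hd' y v); eapply Rlt_le_trans; eauto; apply Rmin_l.
    - exists (mkposreal 1 Rlt_0_1). intros; lra.
    - exists (mkposreal 1 Rlt_0_1). intros; lra. }
  set (delta := fun t => proj1_sig (constructive_indefinite_description _ (Hloc t))).
  assert (Hdelta : forall t, -Wm <= t <= Wm -> delta t <= d0 /\ forall y v, Rabs (y - x0) < delta t -> Rabs (v - t) < delta t -> Rabs (G y v - G x0 t) < eta / 2).
  { intros t Ht. unfold delta. destruct (constructive_indefinite_description _ (Hloc t)). simpl. auto. }
  destruct (compactness_value_1d (- Wm) Wm delta) as [d Hd].
  assert (Htube : forall y v, Rabs (y - x0) < d -> -Wm <= v <= Wm -> Rabs (G y v - G x0 v) <= eta).
  { intros y v Hy Hv. apply NNPP. intros Hn. apply (Hd v Hv). intros [t [Ht [Hvt Hdt]]].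
    apply Hn. destruct (Hdelta t Ht) as [_ Hdt'].
    assert (A1 := Hdt' y v ltac:(lra) Hvt).
    assert (A2 := Hdt' x0 v ltac:(rewrite Rminus_eq_0, Rabs_R0; apply cond_pos) Hvt).
    unfold Rabs in *. repeat destruct Rcase_abs; lra. }
  assert (Hdd0 : d <= d0).
  { apply NNPP; intro Hn; apply (Hd 0 ltac:(lra)); intros [t [Ht [_ Hdt]]]; apply Hn;
    destruct (Hdelta t Ht); lra. }
  assert (Hx00 : Rabs (x0 - x0) < d0) by (rewrite Rminus_eq_0, Rabs_R0; auto).
  assert (HF0 : continuous (fun W => RInt (G x0) 0 W) W0).
  { apply (continuous_RInt_1 (G x0) 0 W0). 
    assert (Hp : 0 < Wm - Rabs W0) by lra.
    exists (mkposreal _ Hp). intros z Hz. apply (RInt_correct (G x0) 0 z).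
    apply Hex; auto. apply ball_R in Hz. simpl in Hz.
    apply (abs_helper z W0). exact Hz. }
  destruct (cont_R_elim _ _ HF0 (eps/2) ltac:(lra)) as [d2 [Hd2 HF]].
  assert (Hp : 0 < Wm - Rabs W0) by lra.
  exists (Rmin d (Rmin d2 (Wm - Rabs W0))). split.
  { repeat apply Rmin_glb_lt; try lra. apply cond_pos. }
  intros y v Hy Hv. simpl.
  assert (Hy' : Rabs (y - x0) < d) by (eapply Rlt_le_trans; [exact Hy|apply Rmin_l]).
  assert (Hv2 : Rabs (v - W0) < d2) by (eapply Rlt_le_trans; [exact Hv|]; eapply Rle_trans; [apply Rmin_r|apply Rmin_l]).
  assert (Hv3 : Rabs (v - W0) < Wm - Rabs W0) by (eapply Rlt_le_trans; [exact Hv|]; eapply Rle_trans; [apply Rmin_r|apply Rmin_r]).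
  assert (Hv4 : Rabs v <= Wm) by (apply (abs_helper v W0); lra).
  assert (Hyd0 : Rabs (y - x0) < d0) by lra.
  assert (E1 : ex_RInt (G y) 0 v) by (apply Hex; auto).
  assert (E2 : ex_RInt (G x0) 0 v) by (apply Hex; auto).
  assert (B : Rabs (RInt (fun t => G y t - G x0 t) 0 v) <= Rabs v * eta).
  { apply RInt_abs_bound. apply (ex_RInt_minus (G y) (G x0)); auto.
    intros t Ht. apply Htube; auto.
    unfold Rmin, Rmax in Ht; destruct Rle_dec; unfold Rabs in *; repeat destruct Rcase_abs; lra. }
  assert (Eq : RInt (fun t => G y t - G x0 t) 0 v = RInt (G y) 0 v - RInt (G x0) 0 v).
  { apply (RInt_minus (G y) (G x0)); auto. }
  rewrite Eq in B.
  assert (B2 : Rabs v * eta <= Wm * eta) by (apply Rmult_le_compat_r; lra).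
  assert (B3 : Wm * eta < eps / 2).
  { unfold eta. apply Rmult_lt_reg_r with (4 * (Wm + 1)). lra.
    field_simplify; try lra. nra. }
  specialize (HF v Hv2).
  replace (RInt (G y) 0 v - RInt (G x0) 0 W0) with
    ((RInt (G y) 0 v - RInt (G x0) 0 v) + (RInt (G x0) 0 v - RInt (G x0) 0 W0)) by ring.
  eapply Rle_lt_trans. apply Rabs_triang. lra.
Qed.


Definition HG (a : R -> R) (hh : R -> R -> R) (x w : R) : R :=
  2 * hh x (x - w ^ 2) / sqrt (qf a x w).
Definition PhiG (a : R -> R) (hh : R -> R -> R) (x W : R) : R := RInt (HG a hh x) 0 W.

Lemma HG_cont a hh x w : regular_scale_factor a -> 0 < x -> w ^ 2 < 2 * x ->
  continuous (fun p : R * R => hh (fst p) (fst p - snd p ^ 2)) (x, w) ->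
  continuous (fun p : R * R => HG a hh (fst p) (snd p)) (x, w).
Proof.
  intros H Hx Hw Hh. unfold HG. apply cdiv. apply cmul. apply cconst. exact Hh.
  apply csqrt. apply (q_cont a x w H Hx).
  simpl. pose proof (q_pos a x w H Hx Hw). pose proof (sqrt_lt_R0 _ H0). lra.
Qed.

Lemma PhiG_cont a hh c x0 W0 : regular_scale_factor a -> 0 < c <= 2 ->
  (forall x w, 0 < x -> w ^ 2 < c * x ->
     continuous (fun p : R * R => hh (fst p) (fst p - snd p ^ 2)) (x, w)) ->
  0 < x0 -> W0 ^ 2 < c * x0 ->
  continuous (fun p : R * R => PhiG a hh (fst p) (snd p)) (x0, W0).
Proof.
  intros H Hc Hh Hx0 HW0. unfold PhiG.
  set (s := sqrt (c * x0)).
  assert (Hs : 0 < s) by (apply sqrt_lt_R0; nra).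
  assert (Hs2 : s * s = c * x0) by (apply sqrt_sqrt; nra).
  assert (HaW : Rabs W0 < s).
  { rewrite <- (Rabs_pos_eq s) by lra. apply Rsqr_lt_abs_0. unfold Rsqr.
    replace (W0 * W0) with (W0 ^ 2) by ring. lra. }
  set (Wm := (Rabs W0 + s) / 2).
  assert (HWm0 : 0 <= Rabs W0) by apply Rabs_pos.
  assert (HWm : Wm ^ 2 < c * x0).
  { unfold Wm. assert (0 <= (Rabs W0 + s) / 2 < s) by lra. nra. }
  set (d0 := Rmin (x0 / 2) ((c * x0 - Wm ^ 2) / (2 * c))).
  assert (Hd0 : 0 < d0). { unfold d0. apply Rmin_glb_lt. lra. apply Rdiv_lt_0_compat; lra. }
  apply (param_cont (HG a hh) x0 W0 Wm d0); auto.
  unfold Wm; lra.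
  intros x w Hx Hw.
  assert (Hd1 := Rmin_l (x0 / 2) ((c * x0 - Wm ^ 2) / (2 * c))).
  assert (Hd2 := Rmin_r (x0 / 2) ((c * x0 - Wm ^ 2) / (2 * c))).
  fold d0 in Hd1, Hd2.
  assert (Hxx : x0 - d0 < x) by (unfold Rabs in Hx; destruct Rcase_abs in Hx; lra).
  assert (Hcd : c * d0 <= (c * x0 - Wm ^ 2) / 2).
  { replace ((c * x0 - Wm ^ 2) / 2) with (c * ((c * x0 - Wm ^ 2) / (2 * c))) by (field; lra).
    apply Rmult_le_compat_l; lra. }
  assert (Hw2 : w ^ 2 <= Wm ^ 2).
  { assert (Rabs w * Rabs w <= Wm * Wm) by (apply Rmult_le_compat; auto; apply Rabs_pos).
    rewrite <- Rabs_mult in H0. simpl. rewrite !Rmult_1_r. 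
    eapply Rle_trans; [apply RRle_abs|exact H0]. }
  assert (Hwx : w ^ 2 < c * x) by nra.
  apply HG_cont; auto. lra. nra. apply Hh; auto; lra.
Qed.


Lemma sqrt_div_sq D y : 0 < D -> 0 < y -> sqrt (D / y ^ 2) = sqrt D / y.
Proof.
  intros HD Hy. assert (E : sqrt (D / y ^ 2) * y = sqrt D).
  { rewrite <- (sqrt_pow2 y) at 2 by lra. rewrite <- sqrt_mult.
    f_equal. field. lra. apply Rlt_le, Rdiv_lt_0_compat; auto. apply pow2_gt_0; lra. apply pow2_ge_0. }
  rewrite <- E. field. lra.
Qed.

Lemma abs_sub_lt x y : 0 < x -> 0 < y -> y ^ 2 < 2 * x -> Rabs (x - y ^ 2) < Rabs x.
Proof. intros Hx Hy Hy2. assert (0 < y ^ 2) by (apply pow2_gt_0; lra).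
  rewrite (Rabs_pos_eq x) by lra. unfold Rabs; destruct Rcase_abs; lra. Qed.

Lemma f_cont a hh x t : regular_scale_factor a -> Rabs t < Rabs x -> continuous (hh x) t ->
  continuous (fun t => hh x t / sqrt (a x ^ 2 - a t ^ 2)) t.
Proof.
  intros H Ht Hh. apply cdiv. auto. apply csqrt. apply cminus. apply cconst. apply cpow. apply (a_cont a H).
  pose proof (sq_lt a H x t Ht). pose proof (sqrt_lt_R0 (a x ^ 2 - a t ^ 2) ltac:(lra)). lra.
Qed.

Lemma sub_proper a hh x W1 W2 : regular_scale_factor a -> 0 < x -> 0 < W1 <= W2 -> W2 ^ 2 < 2 * x ->
  (forall t, x - W2 ^ 2 <= t <= x - W1 ^ 2 -> continuous (hh x) t) ->
  ex_RInt (fun t => hh x t / sqrt (a x ^ 2 - a t ^ 2)) (x - W2 ^ 2) (x - W1 ^ 2) /\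
  is_RInt (HG a hh x) W1 W2 (RInt (fun t => hh x t / sqrt (a x ^ 2 - a t ^ 2)) (x - W2 ^ 2) (x - W1 ^ 2)).
Proof.
  intros H Hx HW HW2 Hh.
  set (f := fun t => hh x t / sqrt (a x ^ 2 - a t ^ 2)).
  assert (HW1' : W1 ^ 2 <= W2 ^ 2) by (apply pow_incr; lra).
  assert (Hfc : forall y, W1 <= y <= W2 -> continuous f (x - y ^ 2)).
  { intros y Hy. apply f_cont; auto. apply abs_sub_lt; try lra.
    assert (y ^ 2 <= W2 ^ 2) by (apply pow_incr; lra). lra.
    apply Hh. assert (y ^ 2 <= W2 ^ 2) by (apply pow_incr; lra).
    assert (W1 ^ 2 <= y ^ 2) by (apply pow_incr; lra). lra. }
  assert (Hex : ex_RInt f (x - W1 ^ 2) (x - W2 ^ 2)).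
  { apply exRc. intros z Hz. rewrite Rmin_right in Hz by lra. rewrite Rmax_left in Hz by lra.
    assert (Hz' : 0 <= x - z) by (pose proof (pow2_ge_0 W1); lra).
    replace z with (x - (sqrt (x - z)) ^ 2). apply Hfc.
    split. apply Rsqr_incr_0_var. unfold Rsqr. rewrite sqrt_sqrt by lra. 
    replace (W1 * W1) with (W1 ^ 2) by ring; lra. apply sqrt_pos.
    apply Rsqr_incr_0_var. unfold Rsqr. rewrite sqrt_sqrt by lra. 
    replace (W2 * W2) with (W2 ^ 2) by ring; lra. lra.
    rewrite pow2_sqrt; lra. }
  split. apply ex_RInt_swap. exact Hex.
  pose proof (is_RInt_comp f (fun y => x - y ^ 2) (fun y => - 2 * y) W1 W2) as C.
  rewrite Rmin_left in C by lra. rewrite Rmax_right in C by lra.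
  specialize (C Hfc).
  assert (C' : forall y, W1 <= y <= W2 -> is_derive (fun y => x - y ^ 2) y (- 2 * y) /\ continuous (fun y => -2 * y) y).
  { intros y _. split. auto_derive; auto. ring.
    apply cmul. apply cconst. apply cid. }
  specialize (C C'). apply is_RInt_opp in C.
  rewrite (opp_RInt_swap f) in C by exact Hex.
  refine (is_RInt_ext _ _ W1 W2 _ _ C). intros y Hy.
  rewrite Rmin_left in Hy by lra. rewrite Rmax_right in Hy by lra.
  change (- (- 2 * y * f (x - y ^ 2)) = HG a hh x y).
  unfold f, HG. rewrite q_formula by lra.
  assert (HD : 0 < a x ^ 2 - a (x - y ^ 2) ^ 2).
  { pose proof (sq_lt a H x (x - y ^ 2)). assert (y ^ 2 <= W2 ^ 2) by (apply pow_incr; lra).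
    assert (Rabs (x - y ^ 2) < Rabs x) by (apply abs_sub_lt; lra). lra. }
  rewrite sqrt_div_sq by lra.
  assert (0 < sqrt (a x ^ 2 - a (x - y ^ 2) ^ 2)) by (apply sqrt_lt_R0; lra).
  field. split; lra.
Qed.

Lemma PhiG_0 a hh x : PhiG a hh x 0 = 0.
Proof. unfold PhiG. apply (RInt_point 0 (HG a hh x)). Qed.

Lemma sqrt_sq_id u : 0 <= u -> sqrt u ^ 2 = u.
Proof. intros; rewrite <- Rsqr_pow2; apply Rsqr_sqrt; auto. Qed.

Lemma sub_improper a hh x t0 : regular_scale_factor a -> 0 < x -> - x < t0 < x ->
  (forall t, t0 <= t <= x -> continuous (hh x) t) ->
  (forall w, 0 <= w <= sqrt (x - t0) -> continuous (HG a hh x) w) ->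
  continuous (PhiG a hh x) 0 -> continuous (PhiG a hh x) (sqrt (x - t0)) ->
  is_RInt_gen (fun t => hh x t / sqrt (a x ^ 2 - a t ^ 2)) (at_right t0) (at_left x)
    (PhiG a hh x (sqrt (x - t0))).
Proof.
  intros H Hx Ht0 Hh HGc HP0 HP1.
  set (f := fun t => hh x t / sqrt (a x ^ 2 - a t ^ 2)).
  set (m := (t0 + x) / 2).
  assert (Hsq : forall u, t0 <= u <= x -> 0 <= sqrt (x - u) <= sqrt (x - t0)).
  { intros u Hu. split. apply sqrt_pos. apply sqrt_le_1_alt. lra. }
  apply filterlimi_lim_ext_loc with
    (f := fun uv : R * R => PhiG a hh x (sqrt (x - fst uv)) - PhiG a hh x (sqrt (x - snd uv))).
  - apply (Filter_prod _ _ _ (fun u => t0 < u < m) (fun v => m < v < x)).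
    + assert (Hr : 0 < m - t0) by (unfold m; lra).
      exists (mkposreal _ Hr). intros u Hu Hu'. change (Rabs (u - t0) < m - t0) in Hu.
      unfold Rabs in Hu; destruct Rcase_abs in Hu; lra.
    + assert (Hr : 0 < x - m) by (unfold m; lra).
      exists (mkposreal _ Hr). intros u Hu Hu'. change (Rabs (u - x) < x - m) in Hu.
      unfold Rabs in Hu; destruct Rcase_abs in Hu; lra.
    + intros u v Hu Hv. simpl.
      set (W1 := sqrt (x - v)). set (W2 := sqrt (x - u)).
      assert (HW1 : 0 < W1) by (apply sqrt_lt_R0; lra).
      assert (HW12 : W1 <= W2) by (apply sqrt_le_1_alt; lra).
      assert (E1 : x - W1 ^ 2 = v) by (unfold W1; rewrite sqrt_sq_id; lra).
      assert (E2 : x - W2 ^ 2 = u) by (unfold W2; rewrite sqrt_sq_id; lra).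
      destruct (sub_proper a hh x W1 W2 H Hx (conj HW1 HW12)) as [Ef Ig].
      { rewrite <- E2 in Hu. pose proof (pow2_ge_0 W2). lra. }
      { intros t Ht. apply Hh. rewrite E1, E2 in Ht. lra. }
      rewrite E1, E2 in Ef, Ig.
      assert (HexG : forall w, 0 <= w <= W2 -> ex_RInt (HG a hh x) 0 w).
      { intros w Hw. apply exRc. intros z Hz. apply HGc.
        rewrite Rmin_left, Rmax_right in Hz by lra. 
        assert (W2 <= sqrt (x - t0)) by (apply Hsq; lra). lra. }
      replace (PhiG a hh x W2 - PhiG a hh x W1) with (RInt f u v).
      apply (RInt_correct f). exact Ef.
      unfold PhiG. rewrite <- (RInt_Chasles (HG a hh x) 0 W1 W2).
      change (plus ?A ?B) with (A + B). 
      rewrite (is_RInt_unique _ _ _ _ Ig). unfold f. change (plus ?A ?B) with (Rplus A B). unfold Rminus. rewrite Rplus_comm, <- Rplus_assoc, Rplus_opp_l, Rplus_0_l. reflexivity.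
      apply HexG; lra. apply ex_RInt_Chasles with 0. apply ex_RInt_swap, HexG; lra. apply HexG; lra.
  - apply filterlim_locally. intros eps.
    assert (C1 : continuous (fun u => PhiG a hh x (sqrt (x - u))) t0).
    { apply (ccomp (fun u => sqrt (x - u))). apply csqrt. apply cminus. apply cconst. apply cid. exact HP1. }
    assert (C2 : continuous (fun u => PhiG a hh x (sqrt (x - u))) x).
    { apply (ccomp (fun u => sqrt (x - u))). apply csqrt. apply cminus. apply cconst. apply cid.
      rewrite Rminus_eq_0, sqrt_0. exact HP0. }
    destruct (cont_R_elim _ _ C1 (eps/2) ltac:(destruct eps; simpl; lra)) as [d1 [Hd1 D1]].
    destruct (cont_R_elim _ _ C2 (eps/2) ltac:(destruct eps; simpl; lra)) as [d2 [Hd2 D2]].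
    rewrite Rminus_eq_0, sqrt_0, PhiG_0 in D2.
    apply (Filter_prod _ _ _ (fun u => Rabs (u - t0) < d1) (fun v => Rabs (v - x) < d2)).
    + exists (mkposreal _ Hd1). intros u Hu _. exact Hu.
    + exists (mkposreal _ Hd2). intros u Hu _. exact Hu.
    + intros u v Hu Hv. apply ball_R. simpl.
      specialize (D1 u Hu). specialize (D2 v Hv).
      replace (PhiG a hh x (sqrt (x - u)) - PhiG a hh x (sqrt (x - v)) - PhiG a hh x (sqrt (x - t0)))
        with ((PhiG a hh x (sqrt (x - u)) - PhiG a hh x (sqrt (x - t0))) + - (PhiG a hh x (sqrt (x - v)) - 0)) by ring.
      eapply Rle_lt_trans. apply Rabs_triang. rewrite Rabs_Ropp. lra.
Qed.


Definition hr (a : R -> R) := fun (_ : R) (t : R) => a t.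
Definition hc (a : R -> R) := fun (x t : R) => / a t * a x.
Definition Phi a x W := PhiG a (hr a) x W.
Definition Psi a x W := PhiG a (hc a) x W.

Lemma hr_cont a x w : regular_scale_factor a ->
  continuous (fun p : R * R => hr a (fst p) (fst p - snd p ^ 2)) (x, w).
Proof. intros H. unfold hr. apply ccomp. apply cminus. apply cfst. apply cpow. apply csnd. apply (a_cont a H). Qed.

Lemma hc_cont a x w : regular_scale_factor a -> 0 < x -> w ^ 2 < 1 * x ->
  continuous (fun p : R * R => hc a (fst p) (fst p - snd p ^ 2)) (x, w).
Proof. intros H Hx Hw. unfold hc. apply cmul. apply cinv.
  apply ccomp. apply cminus. apply cfst. apply cpow. apply csnd. apply (a_cont a H).
  change (a (x - w ^ 2) <> 0). assert (0 < a (x - w ^ 2)). apply (a_pos a H). intro E; lra. intro E; lra.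
  apply ccomp. apply cfst. apply (a_cont a H). Qed.

Lemma Phi_cont a x0 W0 : regular_scale_factor a -> 0 < x0 -> W0 ^ 2 < 2 * x0 ->
  continuous (fun p : R * R => Phi a (fst p) (snd p)) (x0, W0).
Proof. intros H Hx HW. apply (PhiG_cont a (hr a) 2); auto. lra. intros; apply hr_cont; auto. Qed.

Lemma Psi_cont a x0 W0 : regular_scale_factor a -> 0 < x0 -> W0 ^ 2 < 1 * x0 ->
  continuous (fun p : R * R => Psi a (fst p) (snd p)) (x0, W0).
Proof. intros H Hx HW. apply (PhiG_cont a (hc a) 1); auto. lra. intros; apply hc_cont; auto. Qed.

Lemma HGr_cont a x w : regular_scale_factor a -> 0 < x -> w ^ 2 < 2 * x -> continuous (HG a (hr a) x) w.
Proof. intros H Hx Hw. apply cont2_slice. apply HG_cont; auto. apply hr_cont; auto. Qed.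

Lemma HGc_cont a x w : regular_scale_factor a -> 0 < x -> w ^ 2 < x -> continuous (HG a (hc a) x) w.
Proof. intros H Hx Hw. apply cont2_slice. apply HG_cont; auto. lra. apply hc_cont; auto. lra. Qed.

Lemma Phi1_cont a x W : regular_scale_factor a -> 0 < x -> W ^ 2 < 2 * x -> continuous (Phi a x) W.
Proof. intros. apply (cont2_slice (Phi a)). apply Phi_cont; auto. Qed.

Lemma Psi1_cont a x W : regular_scale_factor a -> 0 < x -> W ^ 2 < x -> continuous (Psi a x) W.
Proof. intros. apply (cont2_slice (Psi a)). apply Psi_cont; auto. lra. Qed.


Lemma rho_of_eq a x t0 : regular_scale_factor a -> 0 < x -> - x < t0 < x ->
  rho_of a x t0 = Phi a x (sqrt (x - t0)).
Proof.
  intros H Hx Ht. unfold rho_of, impint.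
  apply is_RInt_gen_unique.
  apply (sub_improper a (hr a) x t0 H Hx Ht).
  - intros t _. apply (a_cont a H).
  - intros w Hw. apply HGr_cont; auto.
    assert (w ^ 2 <= sqrt (x - t0) ^ 2) by (apply pow_incr; lra).
    rewrite sqrt_sq_id in H0; lra.
  - apply (Phi1_cont a x 0 H). lra. simpl; lra.
  - apply (Phi1_cont a x (sqrt (x - t0)) H). lra. rewrite sqrt_sq_id; lra.
Qed.

Lemma chi_eq a s x : regular_scale_factor a -> 0 < s < x ->
  chi a s x = Psi a x (sqrt (x - s)).
Proof.
  intros H Hs. unfold chi, impint.
  replace (fun t => / a t * (a x / sqrt (a x ^ 2 - a t ^ 2)))
    with (fun t => hc a x t / sqrt (a x ^ 2 - a t ^ 2)).
  2: { apply functional_extensionality; intros t. unfold hc, Rdiv. ring. }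
  apply is_RInt_gen_unique.
  apply (sub_improper a (hc a) x s H); try lra.
  - intros t Ht. unfold hc. apply cmul. apply cinv. apply (a_cont a H).
    assert (0 < a t) by (apply (a_pos a H); intro E; lra). intro E; lra. apply cconst.
  - intros w Hw. apply HGc_cont; auto. lra.
    assert (w ^ 2 <= sqrt (x - s) ^ 2) by (apply pow_incr; lra).
    rewrite sqrt_sq_id in H0; lra.
  - apply (Psi1_cont a x 0 H). lra. simpl; lra.
  - apply (Psi1_cont a x (sqrt (x - s)) H). lra. rewrite sqrt_sq_id; lra.
Qed.


Lemma HGr_nonneg a x w : regular_scale_factor a -> 0 < x -> w ^ 2 < 2 * x -> 0 <= HG a (hr a) x w.
Proof. intros H Hx Hw. unfold HG, hr. pose proof (a_nonneg a H (x - w ^ 2)).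
  pose proof (sqrt_lt_R0 _ (q_pos a x w H Hx Hw)). apply Rmult_le_pos. lra. apply Rlt_le, Rinv_0_lt_compat; lra. Qed.

Lemma HGr_pos a x w : regular_scale_factor a -> 0 < x -> w ^ 2 < 2 * x -> w ^ 2 <> x -> 0 < HG a (hr a) x w.
Proof. intros H Hx Hw Hn. unfold HG, hr. assert (0 < a (x - w ^ 2)) by (apply (a_pos a H); intro; lra).
  pose proof (sqrt_lt_R0 _ (q_pos a x w H Hx Hw)). apply Rmult_lt_0_compat. lra. apply Rinv_0_lt_compat; lra. Qed.

Lemma exHGr a x W1 W2 : regular_scale_factor a -> 0 < x -> 0 <= W1 <= W2 -> W2 ^ 2 < 2 * x -> ex_RInt (HG a (hr a) x) W1 W2.
Proof. intros H Hx HW HW2. apply exRc. intros z Hz. rewrite Rmin_left, Rmax_right in Hz by lra.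
  apply HGr_cont; auto. assert (z ^ 2 <= W2 ^ 2) by (apply pow_incr; lra). lra. Qed.

Lemma Phi_diff a x W1 W2 : regular_scale_factor a -> 0 < x -> 0 <= W1 <= W2 -> W2 ^ 2 < 2 * x ->
  Phi a x W2 - Phi a x W1 = RInt (HG a (hr a) x) W1 W2.
Proof. intros H Hx HW HW2. unfold Phi, PhiG. rewrite <- (RInt_Chasles _ 0 W1 W2).
  change (plus ?A ?B) with (Rplus A B). ring.
  apply exHGr; auto; try lra. assert (W1 ^ 2 <= W2 ^ 2) by (apply pow_incr; lra). lra.
  apply exHGr; auto. Qed.

Lemma Phi_incr a x W1 W2 : regular_scale_factor a -> 0 < x -> 0 <= W1 < W2 -> W2 ^ 2 < 2 * x ->
  Phi a x W1 < Phi a x W2.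
Proof.
  intros H Hx HW HW2. assert (D := Phi_diff a x W1 W2 H Hx ltac:(lra) HW2).
  assert (Hs : 0 < sqrt x) by (apply sqrt_lt_R0; lra).
  assert (Hss : sqrt x ^ 2 = x) by (apply sqrt_sq_id; lra).
  assert (Hpos : forall w1 w2, 0 <= w1 < w2 -> w2 ^ 2 < 2 * x -> (w2 <= sqrt x \/ sqrt x <= w1) ->
     0 < RInt (HG a (hr a) x) w1 w2).
  { intros w1 w2 Hw Hw2 Hor. apply RInt_gt_0. lra.
    - intros z Hz. apply HGr_pos; auto. assert (z ^ 2 <= w2 ^ 2) by (apply pow_incr; lra). lra.
      intro E. destruct Hor as [Ho|Ho].
      + assert (z ^ 2 < sqrt x ^ 2) by nra. lra.
      + assert (sqrt x ^ 2 < z ^ 2) by nra. lra.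
    - intros z Hz. apply HGr_cont; auto. assert (z ^ 2 <= w2 ^ 2) by (apply pow_incr; lra). lra. }
  assert (W1 ^ 2 <= W2 ^ 2) by (apply pow_incr; lra).
  destruct (Rle_or_lt W2 (sqrt x)) as [Hl|Hl].
  - pose proof (Hpos W1 W2 HW HW2 (or_introl Hl)). lra.
  - destruct (Rle_or_lt (sqrt x) W1) as [Hl'|Hl'].
    + pose proof (Hpos W1 W2 HW HW2 (or_intror Hl')). lra.
    + assert (D1 := Phi_diff a x W1 (sqrt x) H Hx ltac:(lra) ltac:(lra)).
      assert (D2 := Phi_diff a x (sqrt x) W2 H Hx ltac:(lra) HW2).
      pose proof (Hpos W1 (sqrt x) ltac:(lra) ltac:(lra) (or_introl (Rle_refl _))).
      assert (0 <= RInt (HG a (hr a) x) (sqrt x) W2).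
      { apply RInt_ge_0. lra. apply exHGr; auto; lra. intros z Hz. apply HGr_nonneg; auto.
        assert (z ^ 2 <= W2 ^ 2) by (apply pow_incr; lra). lra. }
      lra.
Qed.

Lemma Phi_inj a x W1 W2 : regular_scale_factor a -> 0 < x -> 0 <= W1 -> 0 <= W2 ->
  W1 ^ 2 < 2 * x -> W2 ^ 2 < 2 * x -> Phi a x W1 = Phi a x W2 -> W1 = W2.
Proof. intros H Hx H1 H2 H1' H2' E. destruct (Rtotal_order W1 W2) as [L|[L|L]]; auto.
  pose proof (Phi_incr a x W1 W2 H Hx ltac:(lra) H2'); lra.
  pose proof (Phi_incr a x W2 W1 H Hx ltac:(lra) H1'); lra. Qed.

Lemma RInt_even (f : R -> R) b : (forall t, f (- t) = f t) -> ex_RInt f 0 b -> RInt f (- b) 0 = RInt f 0 b.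
Proof.
  intros He Hex. apply (RInt_correct (V := R_CompleteNormedModule)) in Hex. set (I := RInt f 0 b) in *.
  assert (H1 : is_RInt f (- 0) (- - b) I) by (rewrite Ropp_0, Ropp_involutive; auto).
  apply is_RInt_comp_opp in H1.
  assert (H2 : is_RInt (fun y => opp (f y)) 0 (- b) I).
  { refine (is_RInt_ext _ _ _ _ _ _ H1). intros y _. rewrite He. reflexivity. }
  apply is_RInt_opp in H2.
  assert (H3 : is_RInt f 0 (- b) (opp I)).
  { refine (is_RInt_ext _ _ _ _ _ _ H2). intros y _. apply opp_opp. }
  apply is_RInt_swap in H3. rewrite opp_opp in H3. apply is_RInt_unique. exact H3.
Qed.

Lemma Phi_refl a x W : regular_scale_factor a -> 0 < x -> sqrt x <= W -> W ^ 2 < 2 * x ->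
  Phi a x W + Phi a x (sqrt (2 * x - W ^ 2)) = 2 * Phi a x (sqrt x).
Proof.
  intros H Hx HW HW2.
  assert (Hs : 0 < sqrt x) by (apply sqrt_lt_R0; lra).
  assert (Hss : sqrt x ^ 2 = x) by (apply sqrt_sq_id; lra).
  assert (HWx : x <= W ^ 2) by (rewrite <- Hss; apply pow_incr; lra).
  set (W' := sqrt (2 * x - W ^ 2)).
  assert (HW' : 0 < W') by (apply sqrt_lt_R0; lra).
  assert (HW'2 : W' ^ 2 = 2 * x - W ^ 2) by (apply sqrt_sq_id; lra).
  assert (HW's : W' <= sqrt x) by (unfold W'; apply sqrt_le_1_alt; lra).
  assert (D1 := Phi_diff a x (sqrt x) W H Hx ltac:(lra) HW2).
  assert (D2 := Phi_diff a x W' (sqrt x) H Hx ltac:(lra) ltac:(lra)).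
  destruct (sub_proper a (hr a) x (sqrt x) W H Hx ltac:(lra) HW2) as [E1 I1].
  { intros; apply (a_cont a H). }
  destruct (sub_proper a (hr a) x W' (sqrt x) H Hx ltac:(lra) ltac:(lra)) as [E2 I2].
  { intros; apply (a_cont a H). }
  rewrite (is_RInt_unique _ _ _ _ I1) in D1. rewrite (is_RInt_unique _ _ _ _ I2) in D2.
  rewrite Hss, HW'2 in *. rewrite Rminus_eq_0 in *.
  replace (x - (2 * x - W ^ 2)) with (W ^ 2 - x) in * by ring.
  replace (x - W ^ 2) with (- (W ^ 2 - x)) in D1 by ring.
  rewrite RInt_even in D1. unfold W' in *. assert (Phi a x W - Phi a x (sqrt x) = Phi a x (sqrt x) - Phi a x (sqrt (2 * x - W ^ 2))) by (rewrite D1, D2; reflexivity). lra.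
  intros t. unfold hr. rewrite (a_even a H). reflexivity. exact E2.
Qed.


Lemma rhoM_eq a x : regular_scale_factor a -> 0 < x -> rhoM a x = Phi a x (sqrt x).
Proof. intros H Hx. unfold rhoM. rewrite rho_of_eq by (auto; lra). rewrite Rminus_0_r. reflexivity. Qed.

Lemma Phi0 a x : Phi a x 0 = 0.
Proof. unfold Phi. apply PhiG_0. Qed.

Lemma rhoM_pos a x : regular_scale_factor a -> 0 < x -> 0 < rhoM a x.
Proof. intros H Hx. rewrite rhoM_eq by auto. rewrite <- (Phi0 a x).
  assert (0 < sqrt x) by (apply sqrt_lt_R0; lra).
  apply Phi_incr; auto. lra. rewrite sqrt_sq_id; lra. Qed.

Lemma Phi_exists a x rho : regular_scale_factor a -> 0 < x -> 0 < rho < 2 * Phi a x (sqrt x) ->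
  exists W, 0 < W /\ W ^ 2 < 2 * x /\ Phi a x W = rho.
Proof.
  intros H Hx Hr.
  assert (Hs : 0 < sqrt x) by (apply sqrt_lt_R0; lra).
  assert (Hss : sqrt x ^ 2 = x) by (apply sqrt_sq_id; lra).
  assert (C0 := Phi1_cont a x 0 H Hx ltac:(simpl; lra)).
  destruct (cont_R_elim _ _ C0 (2 * Phi a x (sqrt x) - rho) ltac:(lra)) as [d [Hd Hc]].
  rewrite Phi0 in Hc.
  set (w := Rmin (d / 2) (sqrt x / 2)).
  assert (Hw0 : 0 < w) by (unfold w; apply Rmin_glb_lt; lra).
  assert (Hw1 : w <= d / 2) by apply Rmin_l.
  assert (Hw2 : w <= sqrt x / 2) by apply Rmin_r.
  assert (Hwx : w ^ 2 < x) by (assert (w ^ 2 <= (sqrt x / 2) ^ 2) by (apply pow_incr; lra); assert ((sqrt x / 2) ^ 2 = x / 4) by (replace ((sqrt x / 2) ^ 2) with (sqrt x ^ 2 / 4) by field; lra); lra).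
  assert (Pw : Phi a x w < 2 * Phi a x (sqrt x) - rho).
  { specialize (Hc w ltac:(rewrite Rminus_0_r, Rabs_pos_eq; lra)).
    rewrite Rminus_0_r in Hc. eapply Rle_lt_trans; [apply RRle_abs|exact Hc]. }
  set (W1 := sqrt (2 * x - w ^ 2)).
  assert (HW1 : W1 ^ 2 = 2 * x - w ^ 2) by (apply sqrt_sq_id; lra).
  assert (HW1s : sqrt x <= W1) by (apply sqrt_le_1_alt; lra).
  assert (HW12 : W1 ^ 2 < 2 * x) by (pose proof (pow2_gt_0 w ltac:(lra)); lra).
  assert (R1 := Phi_refl a x W1 H Hx HW1s HW12).
  replace (sqrt (2 * x - W1 ^ 2)) with w in R1.
  2: { rewrite HW1. replace (2 * x - (2 * x - w ^ 2)) with (w ^ 2) by ring. rewrite sqrt_pow2; lra. }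
  destruct (Ranalysis5.IVT_interv (fun W => Phi a x W - rho) 0 W1) as [z [Hz Ez]].
  { intros b Hb. apply continuity_pt_filterlim. apply cminus. apply Phi1_cont; auto.
    assert (b ^ 2 <= W1 ^ 2) by (apply pow_incr; lra). lra. apply cconst. }
  lra. rewrite Phi0; lra. lra.
  exists z. assert (z <> 0) by (intro E; subst z; rewrite Phi0 in Ez; lra).
  split. lra. split. assert (z ^ 2 <= W1 ^ 2) by (apply pow_incr; lra). lra. lra.
Qed.

Lemma t0fun_spec a x rho : regular_scale_factor a -> 0 < x -> 0 < rho < 2 * rhoM a x ->
  - x < t0fun a x rho < x /\ rho_of a x (t0fun a x rho) = rho.
Proof.
  intros H Hx Hr. unfold t0fun. apply epsilon_spec.
  rewrite rhoM_eq in Hr by auto.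
  destruct (Phi_exists a x rho H Hx Hr) as [W [HW [HW2 E]]].
  exists (x - W ^ 2). assert (0 < W ^ 2) by (apply pow2_gt_0; lra).
  split. lra. rewrite rho_of_eq by (auto; lra).
  replace (x - (x - W ^ 2)) with (W ^ 2) by ring. rewrite sqrt_pow2; lra.
Qed.

Lemma t0fun_W a x rho : regular_scale_factor a -> 0 < x -> 0 < rho < 2 * rhoM a x ->
  0 < sqrt (x - t0fun a x rho) /\ sqrt (x - t0fun a x rho) ^ 2 < 2 * x /\
  Phi a x (sqrt (x - t0fun a x rho)) = rho /\ t0fun a x rho = x - sqrt (x - t0fun a x rho) ^ 2.
Proof.
  intros H Hx Hr. destruct (t0fun_spec a x rho H Hx Hr) as [Ht E].
  rewrite rho_of_eq in E by auto.
  rewrite sqrt_sq_id by lra. split. apply sqrt_lt_R0; lra. split. lra. split. auto. ring.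
Qed.

Lemma t0fun_rhoM a x : regular_scale_factor a -> 0 < x -> t0fun a x (rhoM a x) = 0.
Proof.
  intros H Hx. pose proof (rhoM_pos a x H Hx).
  destruct (t0fun_W a x (rhoM a x) H Hx ltac:(lra)) as [H1 [H2 [H3 H4]]].
  set (t := t0fun a x (rhoM a x)) in *.
  rewrite (rhoM_eq a x H Hx) in H3.
  assert (Hs : 0 < sqrt x) by (apply sqrt_lt_R0; lra).
  apply Phi_inj in H3; auto; try lra. rewrite H4, H3, sqrt_sq_id; lra.
  rewrite sqrt_sq_id; lra.
Qed.


Lemma exp_mono x y : x <= y -> exp x <= exp y.
Proof. intros [H|H]. left; apply exp_increasing; auto. subst; lra. Qed.

Lemma Sk_bound k y : Rabs (Sk k y) <= exp (Rabs y).
Proof.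
  assert (E1 := exp_ineq1_le (Rabs y)). assert (E0 := Rabs_pos y).
  unfold Sk. destruct k as [|p|p]; [lra| destruct p; try (unfold sinhR) |unfold sinhR].
  all: try (pose proof (SIN_bound y); unfold Rabs at 1; destruct Rcase_abs; lra).
  all: assert (exp y <= exp (Rabs y)) by (apply exp_mono, RRle_abs);
       assert (exp (- y) <= exp (Rabs y)) by (apply exp_mono; rewrite <- Rabs_Ropp; apply RRle_abs);
       pose proof (exp_pos y); pose proof (exp_pos (- y));
       unfold Rabs at 1; destruct Rcase_abs; lra.
Qed.

Lemma horizon_bound a c : regular_scale_factor a -> finite_particle_horizon a -> 0 < c ->
  exists M, 0 <= M /\ forall s, 0 < s < c -> RInt (fun t => / a t) s c <= M.
Proof.
  intros H Hf Hc. destruct (Hf c Hc) as [l Hl].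
  assert (P : locally l (ball l (mkposreal 1 Rlt_0_1))) by (apply locally_ball).
  specialize (Hl _ P). destruct Hl as [Q R0 HQ HR HQR].
  destruct HQ as [d Hd].
  exists (Rmax 0 (l + 1)). split. apply Rmax_l. intros s Hs.
  set (u := Rmin s (d / 2)).
  assert (Hu : 0 < u <= s) by (unfold u; split; [apply Rmin_glb_lt; destruct d; simpl; lra|apply Rmin_l]).
  assert (Qu : Q u).
  { apply Hd. apply ball_R. rewrite Rminus_0_r, Rabs_pos_eq by lra.
    assert (u <= d / 2) by apply Rmin_r. destruct d; simpl in *; lra. lra. }
  destruct (HQR u c Qu HR) as [y [Iy By]]. simpl in Iy.
  assert (Hcont : forall z, u <= z <= c -> continuous (fun t => / a t) z).
  { intros z Hz. apply cinv. apply (a_cont a H). assert (0 < a z) by (apply (a_pos a H); intro; lra). intro; lra. }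
  assert (Eu : ex_RInt (fun t => / a t) u s).
  { apply exRc. intros z Hz. rewrite Rmin_left, Rmax_right in Hz by lra. apply Hcont; lra. }
  assert (Es : ex_RInt (fun t => / a t) s c).
  { apply exRc. intros z Hz. rewrite Rmin_left, Rmax_right in Hz by lra. apply Hcont; lra. }
  pose proof (RInt_Chasles (fun t => / a t) u s c Eu Es) as Ch.
  rewrite (is_RInt_unique _ _ _ _ Iy) in Ch.
  assert (0 <= RInt (fun t => / a t) u s).
  { apply RInt_ge_0. lra. auto. intros z Hz. assert (0 < a z) by (apply (a_pos a H); intro; lra).
    apply Rlt_le, Rinv_0_lt_compat; auto. }
  change (plus ?A ?B) with (Rplus A B) in Ch.
  change (Rabs (y - l) < 1) in By. unfold Rabs in By; destruct Rcase_abs in By.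
  eapply Rle_trans; [|apply Rmax_r]. lra.
  eapply Rle_trans; [|apply Rmax_r]. lra.
Qed.

Lemma exHGc a x W1 W2 : regular_scale_factor a -> 0 < x -> 0 <= W1 <= W2 -> W2 ^ 2 < x -> ex_RInt (HG a (hc a) x) W1 W2.
Proof. intros H Hx HW HW2. apply exRc. intros z Hz. rewrite Rmin_left, Rmax_right in Hz by lra.
  apply HGc_cont; auto. assert (z ^ 2 <= W2 ^ 2) by (apply pow_incr; lra). lra. Qed.

Lemma Psi_diff a x W1 W2 : regular_scale_factor a -> 0 < x -> 0 <= W1 <= W2 -> W2 ^ 2 < x ->
  Psi a x W2 - Psi a x W1 = RInt (HG a (hc a) x) W1 W2.
Proof. intros H Hx HW HW2. unfold Psi, PhiG. rewrite <- (RInt_Chasles _ 0 W1 W2).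
  change (plus ?A ?B) with (Rplus A B). ring.
  apply exHGc; auto; try lra. assert (W1 ^ 2 <= W2 ^ 2) by (apply pow_incr; lra). lra.
  apply exHGc; auto. Qed.

Lemma chi_bound a tau0 : regular_scale_factor a -> finite_particle_horizon a -> 0 < tau0 ->
  exists d B, 0 < d /\ forall x s, Rabs (x - tau0) < d -> 0 < s < tau0 / 4 -> Rabs (chi a s x) <= B.
Proof.
  intros H Hf Ht0. set (c := tau0 / 2).
  assert (Hg : continuous (fun x => Psi a x (sqrt (x - c))) tau0).
  { apply (continuous_comp_2 (fun x => x) (fun x => sqrt (x - c)) (Psi a)).
    apply cid. apply csqrt. apply cminus. apply cid. apply cconst.
    apply Psi_cont; auto. rewrite sqrt_sq_id; unfold c; lra. }
  destruct (cont_R_elim _ _ Hg 1 Rlt_0_1) as [d1 [Hd1 G1]].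
  destruct (horizon_bound a c H Hf ltac:(unfold c; lra)) as [M [HM0 HM]].
  set (A1 := a (3 * tau0 / 4)). set (A2 := a (5 * tau0 / 4)).
  assert (HA1 : a c < A1) by (apply (a_mono a H); unfold c; rewrite !Rabs_pos_eq; lra).
  assert (Hac : 0 < a c) by (apply (a_pos a H); unfold c; intro; lra).
  set (D0 := A1 ^ 2 - a c ^ 2).
  assert (HD0 : 0 < D0) by (unfold D0; nra).
  assert (HsD0 : 0 < sqrt D0) by (apply sqrt_lt_R0; auto).
  set (K := A2 / sqrt D0).
  assert (HA2 : 0 < A2) by (apply (a_pos a H); intro; lra).
  assert (HK : 0 <= K) by (unfold K; apply Rlt_le, Rdiv_lt_0_compat; auto).
  exists (Rmin d1 (tau0 / 4)), (Rabs (Psi a tau0 (sqrt (tau0 - c))) + 1 + K * M).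
  split. apply Rmin_glb_lt; lra.
  intros x s Hx Hs.
  assert (Hx1 : Rabs (x - tau0) < d1) by (eapply Rlt_le_trans; [exact Hx|apply Rmin_l]).
  assert (Hx2 : Rabs (x - tau0) < tau0 / 4) by (eapply Rlt_le_trans; [exact Hx|apply Rmin_r]).
  assert (Hx3 : 3 * tau0 / 4 < x < 5 * tau0 / 4) by (unfold Rabs in Hx2; destruct Rcase_abs in Hx2; lra).
  specialize (G1 x Hx1).
  assert (Hsc : s < c < x) by (unfold c; lra).
  rewrite chi_eq by (auto; lra).
  set (W1 := sqrt (x - c)). set (W2 := sqrt (x - s)).
  assert (HW1 : 0 < W1) by (apply sqrt_lt_R0; lra).
  assert (HW12 : W1 <= W2) by (apply sqrt_le_1_alt; lra).
  assert (E1 : x - W1 ^ 2 = c) by (unfold W1; rewrite sqrt_sq_id; lra).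
  assert (E2 : x - W2 ^ 2 = s) by (unfold W2; rewrite sqrt_sq_id; lra).
  assert (HW2x : W2 ^ 2 < x) by lra.
  assert (Dif := Psi_diff a x W1 W2 H ltac:(lra) ltac:(lra) HW2x).
  destruct (sub_proper a (hc a) x W1 W2 H ltac:(lra) (conj HW1 HW12) ltac:(lra)) as [Ef If].
  { intros t Ht. unfold hc. apply cmul. apply cinv. apply (a_cont a H).
    assert (0 < a t) by (apply (a_pos a H); intro; lra). intro; lra. apply cconst. }
  rewrite (is_RInt_unique _ _ _ _ If) in Dif. rewrite E1, E2 in Dif, Ef.
  set (fc := fun t => hc a x t / sqrt (a x ^ 2 - a t ^ 2)) in *.
  assert (Hfc : forall t, s < t < c -> 0 <= fc t <= K * / a t).
  { intros t Ht. unfold fc, hc.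
    assert (Hat : 0 < a t) by (apply (a_pos a H); intro; lra).
    assert (Hatc : a t <= a c) by (apply (a_monole a H); rewrite !Rabs_pos_eq; unfold c in *; lra).
    assert (HA1x : A1 <= a x) by (apply (a_monole a H); rewrite !Rabs_pos_eq; lra).
    assert (HA2x : a x <= A2) by (apply (a_monole a H); rewrite !Rabs_pos_eq; lra).
    assert (HD : D0 <= a x ^ 2 - a t ^ 2) by (unfold D0; nra).
    assert (HsD : sqrt D0 <= sqrt (a x ^ 2 - a t ^ 2)) by (apply sqrt_le_1_alt; auto).
    assert (Hinv : / sqrt (a x ^ 2 - a t ^ 2) <= / sqrt D0) by (apply Rinv_le_contravar; auto).
    assert (Hpos : 0 < / sqrt (a x ^ 2 - a t ^ 2)) by (apply Rinv_0_lt_compat; lra).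
    assert (0 < /a t) by (apply Rinv_0_lt_compat; auto).
    unfold K. unfold Rdiv. split.
    - apply Rmult_le_pos; [apply Rmult_le_pos|]; lra.
    - replace (/ a t * a x * / sqrt (a x ^ 2 - a t ^ 2)) with (/ a t * (a x * / sqrt (a x ^ 2 - a t ^ 2))) by ring.
      replace (A2 * / sqrt D0 * / a t) with (/ a t * (A2 * / sqrt D0)) by ring.
      apply Rmult_le_compat_l. lra. apply Rmult_le_compat; lra. }
  assert (Hex2 : ex_RInt (fun t => K * / a t) s c).
  { apply exRc. intros z Hz. rewrite Rmin_left, Rmax_right in Hz by lra. apply cmul. apply cconst.
    apply cinv. apply (a_cont a H). assert (0 < a z) by (apply (a_pos a H); intro; lra). intro; lra. }
  assert (Hex3 : ex_RInt (fun t => / a t) s c).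
  { apply exRc. intros z Hz. rewrite Rmin_left, Rmax_right in Hz by lra.
    apply cinv. apply (a_cont a H). assert (0 < a z) by (apply (a_pos a H); intro; lra). intro; lra. }
  assert (U : RInt fc s c <= K * M).
  { apply Rle_trans with (RInt (fun t => K * / a t) s c).
    apply RInt_le. lra. exact Ef. exact Hex2. intros t Ht; apply Hfc; auto.
    assert (RS : RInt (fun t => K * / a t) s c = K * RInt (fun t => / a t) s c)
      by exact (RInt_scal (V:=R_CompleteNormedModule) (fun t => / a t) s c K Hex3).
    rewrite RS.
    apply Rmult_le_compat_l; auto. apply HM; lra. }
  assert (L : 0 <= RInt fc s c).
  { apply RInt_ge_0. lra. exact Ef. intros t Ht; apply Hfc; auto. }
  assert (Psi a x W2 = Psi a x W1 + RInt fc s c) by lra.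
  rewrite H0. unfold W1.
  assert (Rabs (Psi a x (sqrt (x - c))) <= Rabs (Psi a tau0 (sqrt (tau0 - c))) + 1).
  { assert (T := Rabs_triang_inv (Psi a x (sqrt (x - c))) (Psi a tau0 (sqrt (tau0 - c)))). lra. }
  eapply Rle_trans. apply Rabs_triang. rewrite (Rabs_pos_eq (RInt fc s c)) by auto. lra.
Qed.


Lemma part1_eps k a tau0 : regular_scale_factor a -> finite_particle_horizon a -> 0 < tau0 ->
  forall eps, 0 < eps -> exists r, 0 < r /\ forall x t, Rabs (x - tau0) < r -> Rabs t < r -> t <> 0 ->
    Rabs (a t ^ 2 * Sk k (chi a (Rabs t) x) ^ 2) < eps.
Proof.
  intros H Hf Ht0 eps Heps.
  destruct (chi_bound a tau0 H Hf Ht0) as [d [B [Hd HB]]].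
  set (E := exp B). assert (HE : 0 < E) by apply exp_pos.
  assert (Hc : continuous (fun t => a t ^ 2) 0) by (apply cpow; apply (a_cont a H)).
  destruct (cont_R_elim _ _ Hc (eps / E ^ 2) ltac:(apply Rdiv_lt_0_compat; auto; apply pow_lt; auto)) as [da [Hda Ha]].
  rewrite (a0 a H) in Ha.
  exists (Rmin d (Rmin (tau0 / 4) da)). split. repeat apply Rmin_glb_lt; lra.
  intros x t Hx Ht Hnz.
  assert (Hx' : Rabs (x - tau0) < d) by (eapply Rlt_le_trans; [exact Hx|apply Rmin_l]).
  assert (Ht1 : Rabs t < tau0 / 4) by (eapply Rlt_le_trans; [exact Ht|]; eapply Rle_trans; [apply Rmin_r|apply Rmin_l]).
  assert (Ht2 : Rabs t < da) by (eapply Rlt_le_trans; [exact Ht|]; eapply Rle_trans; [apply Rmin_r|apply Rmin_r]).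
  assert (Hs : 0 < Rabs t) by (apply Rabs_pos_lt; auto).
  specialize (HB x (Rabs t) Hx' (conj Hs Ht1)).
  specialize (Ha t ltac:(rewrite Rminus_0_r; auto)).
  assert (HSk : Rabs (Sk k (chi a (Rabs t) x)) <= E).
  { eapply Rle_trans. apply Sk_bound. apply exp_mono; auto. }
  assert (HSk2 : Sk k (chi a (Rabs t) x) ^ 2 <= E ^ 2).
  { rewrite <- (pow2_abs (Sk k _)). apply pow_incr. split; auto. apply Rabs_pos. }
  assert (Hat : a t ^ 2 < eps / E ^ 2).
  { replace (0 ^ 2) with 0 in Ha by ring. rewrite Rminus_0_r in Ha.
    eapply Rle_lt_trans; [apply RRle_abs|exact Ha]. }
  assert (0 <= a t ^ 2) by apply pow2_ge_0.
  assert (0 <= Sk k (chi a (Rabs t) x) ^ 2) by apply pow2_ge_0.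
  rewrite Rabs_pos_eq by (apply Rmult_le_pos; auto).
  assert (HE2 : 0 < E ^ 2) by (apply pow_lt; auto).
  apply Rle_lt_trans with (a t ^ 2 * E ^ 2). apply Rmult_le_compat_l; auto.
  replace eps with (eps / E ^ 2 * E ^ 2) by (field; lra).
  apply Rmult_lt_compat_r; auto.
Qed.

Lemma part1 k a : regular_scale_factor a -> finite_particle_horizon a ->
  forall tau0, 0 < tau0 ->
     filterlim
       (fun p : R * R => (a (snd p)) ^ 2 * (Sk k (chi a (Rabs (snd p)) (fst p))) ^ 2)
       (within (fun p : R * R => snd p <> 0) (locally (tau0, 0)))
       (locally 0).
Proof.
  intros H Hf tau0 Ht0. apply filterlim_locally. intros eps.
  destruct (part1_eps k a tau0 H Hf Ht0 eps (cond_pos eps)) as [r [Hr Hp]].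
  exists (mkposreal r Hr). intros [x t] [Hx Ht] Hnz. simpl in Hnz.
  apply ball_R. rewrite Rminus_0_r. simpl.
  apply Hp; auto. change (Rabs (t - 0) < r) in Ht. rewrite Rminus_0_r in Ht. auto.
Qed.


Lemma Phi_mono a x W1 W2 : regular_scale_factor a -> 0 < x -> 0 <= W1 <= W2 -> W2 ^ 2 < 2 * x ->
  Phi a x W1 <= Phi a x W2.
Proof. intros H Hx HW HW2. destruct (Req_dec W1 W2). subst; lra.
  left; apply Phi_incr; auto; lra. Qed.

Lemma W_cont a x0 rho0 : regular_scale_factor a -> 0 < x0 -> 0 < rho0 < 2 * rhoM a x0 ->
  forall eta, 0 < eta -> exists d, 0 < d /\ forall x rho, Rabs (x - x0) < d -> Rabs (rho - rho0) < d ->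
    0 < x -> 0 < rho < 2 * rhoM a x ->
    Rabs (sqrt (x - t0fun a x rho) - sqrt (x0 - t0fun a x0 rho0)) < eta.
Proof.
  intros H Hx0 Hr0 eta Heta.
  destruct (t0fun_W a x0 rho0 H Hx0 Hr0) as [HW0 [HW02 [HP0 _]]].
  set (W0 := sqrt (x0 - t0fun a x0 rho0)) in *.
  set (s2 := sqrt (2 * x0)).
  assert (Hs2 : s2 ^ 2 = 2 * x0) by (apply sqrt_sq_id; lra).
  assert (HWs : W0 < s2).
  { apply Rnot_le_lt; intro L. assert (s2 ^ 2 <= W0 ^ 2) by (apply pow_incr; split; [apply sqrt_pos|lra]). lra. }
  set (e := Rmin eta (Rmin (W0 / 2) ((s2 - W0) / 2))).
  assert (He : 0 < e) by (unfold e; repeat apply Rmin_glb_lt; lra).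
  assert (He1 : e <= eta) by apply Rmin_l.
  assert (He2 : e <= W0 / 2) by (eapply Rle_trans; [apply Rmin_r|apply Rmin_l]).
  assert (He3 : e <= (s2 - W0) / 2) by (eapply Rle_trans; [apply Rmin_r|apply Rmin_r]).
  assert (Hup : (W0 + e) ^ 2 < 2 * x0).
  { rewrite <- Hs2. assert (0 <= W0 + e < s2) by lra. nra. }
  assert (Hlo2 : (W0 - e) ^ 2 < 2 * x0).
  { assert ((W0 - e) ^ 2 <= (W0 + e) ^ 2) by (apply pow_incr; lra). lra. }
  assert (P1 : Phi a x0 (W0 - e) < rho0) by (rewrite <- HP0; apply Phi_incr; auto; lra).
  assert (P2 : rho0 < Phi a x0 (W0 + e)) by (rewrite <- HP0; apply Phi_incr; auto; lra).
  set (gap := Rmin (rho0 - Phi a x0 (W0 - e)) (Phi a x0 (W0 + e) - rho0)).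
  assert (Hgap : 0 < gap) by (unfold gap; apply Rmin_glb_lt; lra).
  assert (Hg1 : gap <= rho0 - Phi a x0 (W0 - e)) by apply Rmin_l.
  assert (Hg2 : gap <= Phi a x0 (W0 + e) - rho0) by apply Rmin_r.
  destruct (cont2_elim _ _ _ (Phi_cont a x0 (W0 - e) H Hx0 Hlo2) (gap / 2) ltac:(lra)) as [d1 [Hd1 C1]].
  destruct (cont2_elim _ _ _ (Phi_cont a x0 (W0 + e) H Hx0 Hup) (gap / 2) ltac:(lra)) as [d2 [Hd2 C2]].
  set (d3 := (2 * x0 - (W0 + e) ^ 2) / 4).
  assert (Hd3 : 0 < d3) by (unfold d3; lra).
  exists (Rmin (Rmin d1 d2) (Rmin d3 (gap / 2))). split.
  { repeat apply Rmin_glb_lt; lra. }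
  intros x rho Hx Hr Hxp Hrp.
  assert (Hm1 : Rabs (x - x0) < d1) by (eapply Rlt_le_trans; [exact Hx|]; eapply Rle_trans; [apply Rmin_l|apply Rmin_l]).
  assert (Hm2 : Rabs (x - x0) < d2) by (eapply Rlt_le_trans; [exact Hx|]; eapply Rle_trans; [apply Rmin_l|apply Rmin_r]).
  assert (Hm3 : Rabs (x - x0) < d3) by (eapply Rlt_le_trans; [exact Hx|]; eapply Rle_trans; [apply Rmin_r|apply Rmin_l]).
  assert (Hm4 : Rabs (rho - rho0) < gap / 2) by (eapply Rlt_le_trans; [exact Hr|]; eapply Rle_trans; [apply Rmin_r|apply Rmin_r]).
  assert (Q1 := C1 x (W0 - e) Hm1 ltac:(rewrite Rminus_eq_0, Rabs_R0; lra)).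
  assert (Q2 := C2 x (W0 + e) Hm2 ltac:(rewrite Rminus_eq_0, Rabs_R0; lra)).
  simpl in Q1, Q2.
  assert (Hx2 : (W0 + e) ^ 2 < 2 * x) by (unfold d3 in Hm3; unfold Rabs in Hm3; destruct Rcase_abs in Hm3; lra).
  destruct (t0fun_W a x rho H Hxp Hrp) as [HW [HW2 [HP _]]].
  set (W := sqrt (x - t0fun a x rho)) in *.
  assert (A1 : Phi a x (W0 - e) < rho).
  { unfold Rabs in Q1, Hm4; destruct Rcase_abs in Q1; destruct Rcase_abs in Hm4; lra. }
  assert (A2 : rho < Phi a x (W0 + e)).
  { unfold Rabs in Q2, Hm4; destruct Rcase_abs in Q2; destruct Rcase_abs in Hm4; lra. }
  assert (B1 : W0 - e < W).
  { apply Rnot_le_lt; intro L. assert (Phi a x W <= Phi a x (W0 - e)).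
    apply Phi_mono; auto; try lra. assert ((W0 - e) ^ 2 <= (W0 + e) ^ 2) by (apply pow_incr; lra). lra. lra. }
  assert (B2 : W < W0 + e).
  { apply Rnot_le_lt; intro L. assert (Phi a x (W0 + e) <= Phi a x W).
    apply Phi_mono; auto; try lra. lra. }
  unfold Rabs; destruct Rcase_abs; lra.
Qed.


Lemma T_cont a x0 rho0 : regular_scale_factor a -> 0 < x0 -> 0 < rho0 < 2 * rhoM a x0 ->
  forall eps, 0 < eps -> exists d, 0 < d /\ forall x rho, Rabs (x - x0) < d -> Rabs (rho - rho0) < d ->
    0 < x -> 0 < rho < 2 * rhoM a x ->
    Rabs (t0fun a x rho - t0fun a x0 rho0) < eps.
Proof.
  intros H Hx0 Hr0 eps Heps.
  destruct (t0fun_W a x0 rho0 H Hx0 Hr0) as [HW0 [_ [_ E0]]].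
  set (W0 := sqrt (x0 - t0fun a x0 rho0)) in *.
  set (eta := Rmin 1 (eps / (2 * (2 * W0 + 1)))).
  assert (Heta : 0 < eta) by (unfold eta; apply Rmin_glb_lt; [lra|apply Rdiv_lt_0_compat; lra]).
  assert (He1 : eta <= 1) by apply Rmin_l.
  assert (He2 : eta <= eps / (2 * (2 * W0 + 1))) by apply Rmin_r.
  destruct (W_cont a x0 rho0 H Hx0 Hr0 eta Heta) as [d [Hd HWc]].
  exists (Rmin d (eps / 2)). split. apply Rmin_glb_lt; lra.
  intros x rho Hx Hr Hxp Hrp.
  assert (Hx1 : Rabs (x - x0) < d) by (eapply Rlt_le_trans; [exact Hx|apply Rmin_l]).
  assert (Hx2 : Rabs (x - x0) < eps / 2) by (eapply Rlt_le_trans; [exact Hx|apply Rmin_r]).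
  assert (Hr1 : Rabs (rho - rho0) < d) by (eapply Rlt_le_trans; [exact Hr|apply Rmin_l]).
  specialize (HWc x rho Hx1 Hr1 Hxp Hrp).
  destruct (t0fun_W a x rho H Hxp Hrp) as [HW [_ [_ E]]].
  fold W0 in HWc.
  set (W := sqrt (x - t0fun a x rho)) in *.
  rewrite E, E0.
  replace (x - W ^ 2 - (x0 - W0 ^ 2)) with ((x - x0) - (W - W0) * (W + W0)) by ring.
  assert (Hb : Rabs ((W - W0) * (W + W0)) <= eta * (2 * W0 + 1)).
  { rewrite Rabs_mult. apply Rmult_le_compat; try apply Rabs_pos. lra.
    rewrite Rabs_pos_eq by lra. unfold Rabs in HWc; destruct Rcase_abs in HWc; lra. }
  assert (Hb2 : eta * (2 * W0 + 1) <= eps / 2).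
  { apply Rle_trans with (eps / (2 * (2 * W0 + 1)) * (2 * W0 + 1)).
    apply Rmult_le_compat_r; lra. right; field; lra. }
  unfold Rminus at 1. eapply Rle_lt_trans. apply Rabs_triang. rewrite Rabs_Ropp. lra.
Qed.

Lemma Sk_cont k y : continuous (Sk k) y.
Proof.
  unfold Sk. destruct k as [|p|p]; [apply cid| destruct p|].
  all: try apply continuous_sin.
  all: unfold sinhR; apply (@ex_derive_continuous R_AbsRing R_NormedModule); auto_derive; auto.
Qed.

Definition Gf a k (p : R * R) := a (snd p) ^ 2 * Sk k (Psi a (fst p) (sqrt (fst p - Rabs (snd p)))) ^ 2.

Lemma Gf_cont a k x0 T0 : regular_scale_factor a -> 0 < x0 -> T0 <> 0 -> Rabs T0 < x0 ->
  continuous (Gf a k) (x0, T0).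
Proof.
  intros H Hx HT HTx. unfold Gf. apply cmul. apply cpow. apply ccomp. apply csnd. apply (a_cont a H).
  apply cpow. apply (ccomp (fun p : R * R => Psi a (fst p) (sqrt (fst p - Rabs (snd p)))) (Sk k)).
  2: apply Sk_cont.
  apply (continuous_comp_2 (fun p : R * R => fst p) (fun p : R * R => sqrt (fst p - Rabs (snd p))) (Psi a)).
  apply cfst. apply csqrt. apply cminus. apply cfst. apply ccomp. apply csnd. apply continuous_Rabs.
  simpl. apply Psi_cont; auto. rewrite sqrt_sq_id. assert (0 < Rabs T0) by (apply Rabs_pos_lt; auto). lra. lra.
Qed.

Lemma gth_eq a k x rho : regular_scale_factor a -> 0 < x -> 0 < rho < 2 * rhoM a x ->
  t0fun a x rho <> 0 -> g_thth a k x rho = Gf a k (x, t0fun a x rho).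
Proof.
  intros H Hx Hr Hn. destruct (t0fun_spec a x rho H Hx Hr) as [Ht _].
  unfold g_thth, Gf. simpl. destruct (Req_EM_T (t0fun a x rho) 0); [contradiction|].
  rewrite chi_eq; auto. split. apply Rabs_pos_lt; auto. unfold Rabs; destruct Rcase_abs; lra.
Qed.

Lemma gth_cont a k x0 rho0 : regular_scale_factor a -> finite_particle_horizon a ->
  0 < x0 -> 0 < rho0 < 2 * rhoM a x0 ->
  forall eps, 0 < eps -> exists d, 0 < d /\ forall x rho, Rabs (x - x0) < d -> Rabs (rho - rho0) < d ->
    0 < x -> 0 < rho < 2 * rhoM a x ->
    Rabs (g_thth a k x rho - g_thth a k x0 rho0) < eps.
Proof.
  intros H Hf Hx0 Hr0 eps Heps.
  set (T0 := t0fun a x0 rho0).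
  destruct (t0fun_spec a x0 rho0 H Hx0 Hr0) as [HT0 _]. fold T0 in HT0.
  destruct (Req_dec T0 0) as [Z|NZ].
  - assert (G0 : g_thth a k x0 rho0 = 0).
    { unfold g_thth. fold T0. destruct (Req_EM_T T0 0); [reflexivity|contradiction]. }
    rewrite G0.
    destruct (part1_eps k a x0 H Hf Hx0 eps Heps) as [r [Hr Hp]].
    destruct (T_cont a x0 rho0 H Hx0 Hr0 r Hr) as [d [Hd Hc]].
    exists (Rmin d r). split. apply Rmin_glb_lt; lra.
    intros x rho Hx Hrh Hxp Hrp.
    assert (Hx1 : Rabs (x - x0) < d) by (eapply Rlt_le_trans; [exact Hx|apply Rmin_l]).
    assert (Hx2 : Rabs (x - x0) < r) by (eapply Rlt_le_trans; [exact Hx|apply Rmin_r]).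
    assert (Hr1 : Rabs (rho - rho0) < d) by (eapply Rlt_le_trans; [exact Hrh|apply Rmin_l]).
    specialize (Hc x rho Hx1 Hr1 Hxp Hrp). fold T0 in Hc. rewrite Z, Rminus_0_r in Hc.
    rewrite Rminus_0_r. unfold g_thth.
    destruct (Req_EM_T (t0fun a x rho) 0). rewrite Rabs_R0; lra.
    apply Hp; auto.
  - assert (HT0a : Rabs T0 < x0) by (unfold Rabs; destruct Rcase_abs; lra).
    assert (HG := Gf_cont a k x0 T0 H Hx0 NZ HT0a).
    destruct (cont2_elim _ _ _ HG eps Heps) as [dG [HdG CG]].
    assert (HT0p : 0 < Rabs T0) by (apply Rabs_pos_lt; auto).
    destruct (T_cont a x0 rho0 H Hx0 Hr0 (Rmin dG (Rabs T0 / 2)) ltac:(apply Rmin_glb_lt; lra)) as [d [Hd Hc]].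
    exists (Rmin d dG). split. apply Rmin_glb_lt; lra.
    intros x rho Hx Hrh Hxp Hrp.
    assert (Hx1 : Rabs (x - x0) < d) by (eapply Rlt_le_trans; [exact Hx|apply Rmin_l]).
    assert (Hx2 : Rabs (x - x0) < dG) by (eapply Rlt_le_trans; [exact Hx|apply Rmin_r]).
    assert (Hr1 : Rabs (rho - rho0) < d) by (eapply Rlt_le_trans; [exact Hrh|apply Rmin_l]).
    specialize (Hc x rho Hx1 Hr1 Hxp Hrp). fold T0 in Hc.
    assert (Hc1 : Rabs (t0fun a x rho - T0) < dG) by (eapply Rlt_le_trans; [exact Hc|apply Rmin_l]).
    assert (Hc2 : Rabs (t0fun a x rho - T0) < Rabs T0 / 2) by (eapply Rlt_le_trans; [exact Hc|apply Rmin_r]).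
    assert (Hnz : t0fun a x rho <> 0).
    { intro E. rewrite E in Hc2. rewrite Rminus_0_l, Rabs_Ropp in Hc2. lra. }
    rewrite (gth_eq a k x rho H Hxp Hrp Hnz), (gth_eq a k x0 rho0 H Hx0 Hr0 NZ).
    fold T0. apply CG; auto.
Qed.


Lemma rho_max_lt a x rho : rho < rho_max a x -> rho < 2 * rhoM a x.
Proof.
  unfold rho_max. destruct (excluded_middle_informative _) as [[r Hr]|_]; [|auto].
  destruct (Glb_Rbar_correct (rho_max_set a x)) as [Hlb Hglb].
  assert (L1 := Hlb r Hr).
  assert (L2 : Rbar_le (Finite 0) (Glb_Rbar (rho_max_set a x))).
  { apply Hglb. intros y Hy. destruct Hy as [[Hy _] _]. simpl. lra. }
  destruct Hr as [[Hr1 Hr2] _].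
  destruct (Glb_Rbar (rho_max_set a x)); simpl in *; try contradiction. lra.
Qed.

Lemma part2_th a k th1 ph1 (p : R * R * R * R) : regular_scale_factor a -> finite_particle_horizon a ->
  D_polar a th1 ph1 p ->
  filterlim (fun q : R * R * R * R => g_thth a k (fst (fst (fst q))) (snd (fst (fst q))))
       (within (D_polar a th1 ph1) (locally p))
       (locally (g_thth a k (fst (fst (fst p))) (snd (fst (fst p))))).
Proof.
  intros H Hf Hp. destruct p as [[[x0 rho0] th0] ph0].
  destruct Hp as [Hx0 [[Hr0 Hr0'] _]]. apply rho_max_lt in Hr0'.
  apply filterlim_locally. intros eps.
  destruct (gth_cont a k x0 rho0 H Hf Hx0 (conj Hr0 Hr0') eps (cond_pos eps)) as [d [Hd Hc]].
  exists (mkposreal d Hd). intros [[[x rho] th] ph] Hq HD.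
  destruct Hq as [[[Hx Hr] _] _]. simpl in *.
  destruct HD as [Hxp [[Hrp Hrp'] _]]. apply rho_max_lt in Hrp'.
  apply ball_R. apply Hc; auto.
Qed.

Lemma part2_sin th1 ph1 a (p : R * R * R * R) :
  filterlim (fun q : R * R * R * R => sin (snd (fst q)) ^ 2)
       (within (D_polar a th1 ph1) (locally p))
       (locally (sin (snd (fst p)) ^ 2)).
Proof.
  destruct p as [[[x0 rho0] th0] ph0].
  apply filterlim_locally. intros eps.
  assert (C : continuous (fun t => sin t ^ 2) th0) by (apply cpow; apply continuous_sin).
  destruct (cont_R_elim _ _ C eps (cond_pos eps)) as [d [Hd Hc]].
  exists (mkposreal d Hd). intros [[[x rho] th] ph] Hq HD.
  destruct Hq as [[_ Ht] _]. simpl in *. apply ball_R. apply Hc. exact Ht.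
Qed.

Lemma part2 k a : regular_scale_factor a -> finite_particle_horizon a ->
  (forall th1 ph1 (p : R * R * R * R), D_polar a th1 ph1 p ->
     filterlim (fun q : R * R * R * R => g_thth a k (fst (fst (fst q))) (snd (fst (fst q))))
       (within (D_polar a th1 ph1) (locally p))
       (locally (g_thth a k (fst (fst (fst p))) (snd (fst (fst p)))))
     /\
     filterlim (fun q : R * R * R * R =>
                  g_phph a k (fst (fst (fst q))) (snd (fst (fst q))) (snd (fst q)))
       (within (D_polar a th1 ph1) (locally p))
       (locally (g_phph a k (fst (fst (fst p))) (snd (fst (fst p))) (snd (fst p))))).
Proof.
  intros H Hf th1 ph1 p Hp. split. apply part2_th; auto.
  unfold g_phph.
  apply (filterlim_comp_2 _ _ Rmult (part2_th a k th1 ph1 p H Hf Hp) (part2_sin th1 ph1 a p)).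
  apply (@filterlim_mult R_AbsRing).
Qed.

Lemma part3 k a : regular_scale_factor a ->
  (forall tau, 0 < tau ->
     g_thth a k tau (rhoM a tau) = 0 /\
     forall theta, g_phph a k tau (rhoM a tau) theta = 0).
Proof.
  intros H tau Ht.
  assert (G : g_thth a k tau (rhoM a tau) = 0).
  { unfold g_thth. rewrite (t0fun_rhoM a tau H Ht). destruct (Req_EM_T 0 0); [reflexivity|congruence]. }
  split; auto. intros theta. unfold g_phph. rewrite G. ring.
Qed.

Theorem theorem7p1 (k : Z) (a : R -> R) :
  (k = (-1)%Z \/ k = 0%Z \/ k = 1%Z) ->
  regular_scale_factor a ->
  finite_particle_horizon a ->
  (forall tau0, 0 < tau0 ->
     filterlim
       (fun p : R * R => (a (snd p)) ^ 2 * (Sk k (chi a (Rabs (snd p)) (fst p))) ^ 2)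
       (within (fun p : R * R => snd p <> 0) (locally (tau0, 0)))
       (locally 0)) /\
  (forall th1 ph1 (p : R * R * R * R), D_polar a th1 ph1 p ->
     filterlim (fun q : R * R * R * R => g_thth a k (fst (fst (fst q))) (snd (fst (fst q))))
       (within (D_polar a th1 ph1) (locally p))
       (locally (g_thth a k (fst (fst (fst p))) (snd (fst (fst p)))))
     /\
     filterlim (fun q : R * R * R * R =>
                  g_phph a k (fst (fst (fst q))) (snd (fst (fst q))) (snd (fst q)))
       (within (D_polar a th1 ph1) (locally p))
       (locally (g_phph a k (fst (fst (fst p))) (snd (fst (fst p))) (snd (fst p))))) /\
  (forall tau, 0 < tau ->
     g_thth a k tau (rhoM a tau) = 0 /\
     forall theta, g_phph a k tau (rhoM a tau) theta = 0).
Proof.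
  intros _ H Hf. split. apply part1; auto. split. apply part2; auto. apply part3; auto.
Qed.
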